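(* Let $T$ be a complete theory and $\phi(x,y)$ a formula. The following are equivalent: (1) $\phi(x,y)$ has IP. (2) There exist a model $M$ of $T$, a tuple $b\in M$ and $\sigma\in\mathrm{Aut}(M)$ such that, with $U=\phi(M,b)$, the set $\xi_{\sigma,U}(M)$ is dense in $2^{\mathbb{Z}}$. (3) There exist a model $M$ of $T$ and $\sigma\in\mathrm{Aut}(M)$ such that for every $n\in\mathbb{N}$ there is an instance $U_n=\phi(M,b_n)$, $b_n\in M$, such that every binary sequence of length $n$ appears as a subsequence of some element of $\xi_{\sigma,U_n}(M)$. (4) There exist a model $M$ of $T$, a tuple $b\in M$ and $\sigma\in\mathrm{Aut}(M)$ such that, with $U=\phi(M,b)$, $\xi_{\sigma,U}(M)$ contains a universal sequence. (5) There exist a model $M$ of $T$, a tuple $b\in M$ and $\sigma\in\mathrm{Aut}(M)$ such that, with $U=\phi(M,b)$, $\xi_{\sigma,U}(M)=2^{\mathbb{Z}}$. (6) There exists a model $M$ of $T$ such that $\rho_\phi(M)$ is dense in $2^{\mathbb{Z}}$.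
   Context: $\phi(x,y)$ has IP if in some model, for every $n$, there are $a_1,\dots,a_n$ such that for every $J\subseteq\{1,\dots,n\}$ there is $b_J$ with $\phi(a_i,b_J)\iff i\in J$. Subsets of $\mathbb{Z}$ are identified with binary $\mathbb{Z}$-sequences; $2^{\mathbb{Z}}$ has the product topology. For $\sigma\in\mathrm{Aut}(M)$ and $U\subseteq M$ (in the sort of $x$), $\xi_{\sigma,U}(a)=\{n\in\mathbb{Z}:\sigma^n(a)\in U\}$ and $\xi_{\sigma,U}(M)$ is its image. A finite binary sequence ''appears as a subsequence'' of a $\mathbb{Z}$-sequence if it occurs as a block of consecutive entries; a binary $\mathbb{Z}$-sequence is universal if every finite binary sequence appears in it in this sense. $\rho_\phi(M)=\bigcup_{b}\bigcup_{\sigma\in\mathrm{Aut}(M)}\xi_{\sigma,\phi(M,b)}(M)$, the union over all parameter tuples $b$ in $M$. *)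

(* Defs.v *)
From Stdlib Require Import ZArith List Arith.
From Stdlib Require Vectors.Fin.
Import ListNotations.
Set Implicit Arguments.

Record signature : Type := Signature {
  funsym : Type; fun_ar : funsym -> nat;
  relsym : Type; rel_ar : relsym -> nat }.

Section Syntax.
Variable L : signature.

Inductive term : Type :=
| tvar : nat -> term
| tapp : forall f : funsym L, (Fin.t (@fun_ar L f) -> term) -> term.

(* variables are named by natural numbers; f_all n φ is "forall x_n, φ" *)
Inductive formula : Type :=
| f_false : formula
| f_eq : term -> term -> formula
| f_rel : forall r : relsym L, (Fin.t (@rel_ar L r) -> term) -> formula
| f_imp : formula -> formula -> formula
| f_all : nat -> formula -> formula.

Definition f_not (φ : formula) : formula := f_imp φ f_false.

Fixpoint t_occurs (i : nat) (t : term) : Prop :=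
  match t with
  | tvar j => i = j
  | tapp f ts => exists j, t_occurs i (ts j)
  end.

Fixpoint occurs_free (i : nat) (φ : formula) : Prop :=
  match φ with
  | f_false => False
  | f_eq t1 t2 => t_occurs i t1 \/ t_occurs i t2
  | f_rel r ts => exists j, t_occurs i (ts j)
  | f_imp φ1 φ2 => occurs_free i φ1 \/ occurs_free i φ2
  | f_all n φ1 => i <> n /\ occurs_free i φ1
  end.

Definition sentence (φ : formula) : Prop := forall i, ~ occurs_free i φ.
End Syntax.

Record structure (L : signature) : Type := Structure {
  carrier :> Type;
  witness : carrier;  (* structures are nonempty *)
  fun_int : forall f : funsym L, (Fin.t (@fun_ar L f) -> carrier) -> carrier;
  rel_int : forall r : relsym L, (Fin.t (@rel_ar L r) -> carrier) -> Prop }.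

Section Semantics.
Variables (L : signature) (M : structure L).

Fixpoint t_eval (v : nat -> M) (t : term L) : M :=
  match t with
  | tvar _ j => v j
  | tapp f ts => fun_int M f (fun j => t_eval v (ts j))
  end.

Definition upd (v : nat -> M) (n : nat) (a : M) : nat -> M :=
  fun i => if Nat.eqb i n then a else v i.

Fixpoint sat (v : nat -> M) (φ : formula L) : Prop :=
  match φ with
  | f_false _ => False
  | f_eq t1 t2 => t_eval v t1 = t_eval v t2
  | f_rel r ts => rel_int M r (fun j => t_eval v (ts j))
  | f_imp φ1 φ2 => sat v φ1 -> sat v φ2
  | f_all n φ1 => forall a : M, sat (upd v n a) φ1
  end.

Definition satS (φ : formula L) : Prop := sat (fun _ => witness M) φ.

(* valuation x_0..x_{k-1} := a, x_k..x_{k+m-1} := b, others arbitrary *)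
Definition env2 (k m : nat) (a : Fin.t k -> M) (b : Fin.t m -> M) : nat -> M :=
  fun n => match lt_dec n k with
           | left h => a (Fin.of_nat_lt h)
           | right _ => match lt_dec (n - k) m with
                        | left h => b (Fin.of_nat_lt h)
                        | right _ => witness M
                        end
           end.

Definition sat2 (k m : nat) (φ : formula L) (a : Fin.t k -> M) (b : Fin.t m -> M) : Prop :=
  sat (env2 a b) φ.
End Semantics.

Definition theory (L : signature) := formula L -> Prop.

Definition is_model (L : signature) (T : theory L) (M : structure L) : Prop :=
  forall ψ, T ψ -> satS M ψ.

Definition complete_theory (L : signature) (T : theory L) : Prop :=
  (forall ψ, T ψ -> sentence ψ) /\
  (exists M : structure L, is_model T M) /\
  (forall ψ, sentence ψ ->
     (forall M : structure L, is_model T M -> satS M ψ) \/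
     (forall M : structure L, is_model T M -> satS M (f_not ψ))).

(* φ(x,y) is a formula in the variables x = x_0..x_{k-1}, y = x_k..x_{k+m-1} *)
Definition formula_in (L : signature) (k m : nat) (φ : formula L) : Prop :=
  forall i, occurs_free i φ -> i < k + m.

Definition has_IP (L : signature) (T : theory L) (k m : nat) (φ : formula L) : Prop :=
  exists M : structure L, is_model T M /\
    forall n : nat, exists a : nat -> (Fin.t k -> M),
      forall J : nat -> Prop, exists b : Fin.t m -> M,
        forall i, i < n -> (@sat2 L M k m φ (a i) b <-> J i).

Record automorphism (L : signature) (M : structure L) : Type := Aut {
  aut_fun :> M -> M;
  aut_inv : M -> M;
  aut_inv_l : forall x, aut_inv (aut_fun x) = x;
  aut_inv_r : forall x, aut_fun (aut_inv x) = x;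
  aut_fun_hom : forall f (a : Fin.t (@fun_ar L f) -> M),
      aut_fun (fun_int M f a) = fun_int M f (fun j => aut_fun (a j));
  aut_rel_hom : forall r (a : Fin.t (@rel_ar L r) -> M),
      rel_int M r a <-> rel_int M r (fun j => aut_fun (a j)) }.

Definition aut_pow (L : signature) (M : structure L) (σ : automorphism M)
  (z : Z) (x : M) : M :=
  match z with
  | Z0 => x
  | Zpos p => Pos.iter (aut_fun σ) x p
  | Zneg p => Pos.iter (aut_inv σ) x p
  end.

Definition aut_pow_tuple (L : signature) (M : structure L) (σ : automorphism M)
  (k : nat) (z : Z) (a : Fin.t k -> M) : Fin.t k -> M :=
  fun j => aut_pow σ z (a j).

(** * Binary Z-sequences = subsets of Z *)
Definition zseq := Z -> Prop.

Definition xi (L : signature) (M : structure L) (σ : automorphism M) (k : nat)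
  (U : (Fin.t k -> M) -> Prop) (a : Fin.t k -> M) : zseq :=
  fun n => U (aut_pow_tuple σ n a).

(* membership of s in ξ_{σ,U}(M) (sets of integers compared extensionally) *)
Definition in_xi_image (L : signature) (M : structure L) (σ : automorphism M)
  (k : nat) (U : (Fin.t k -> M) -> Prop) (s : zseq) : Prop :=
  exists a : Fin.t k -> M, forall n, xi σ U a n <-> s n.

Definition instance (L : signature) (M : structure L) (k m : nat)
  (φ : formula L) (b : Fin.t m -> M) : (Fin.t k -> M) -> Prop :=
  fun a => @sat2 L M k m φ a b.

(* density in 2^ℤ with the product topology: S meets every basic open
   cylinder {s | s z <-> v z for all z in F}, F finite *)
Definition dense (S : zseq -> Prop) : Prop :=
  forall (F : list Z) (v : zseq), exists s, S s /\ forall z, In z F -> (s z <-> v z).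

Definition appears_in (w : list bool) (s : zseq) : Prop :=
  exists z0 : Z, forall i, i < length w ->
    (s (z0 + Z.of_nat i)%Z <-> nth i w false = true).

Definition universal (s : zseq) : Prop := forall w : list bool, appears_in w s.

Definition rho (L : signature) (M : structure L) (k m : nat) (φ : formula L)
  (s : zseq) : Prop :=
  exists (b : Fin.t m -> M) (σ : automorphism M), in_xi_image σ (@instance L M k m φ b) s.

(* Main.v *)
Require Import Defs.
From Stdlib Require Import ZArith List Arith Lia.
From Stdlib Require Vectors.Fin.
From Stdlib Require Import Classical ClassicalEpsilon FunctionalExtensionality PropExtensionality ProofIrrelevance.
Import ListNotations.
From mathcomp Require classical_sets filter.
Unset Asymmetric Patterns.
Set Bullet Behavior "Strict Subproofs".
Unset Implicit Arguments.
#[local] Arguments t_eval {L M} v t.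
#[local] Arguments sat {L M} v φ.
#[local] Arguments upd {L M} v n a _.
#[local] Arguments env2 {L M k m} a b _.
#[local] Arguments sat2 {L M k m} φ a b.
#[local] Arguments fun_ar {s} _.
#[local] Arguments rel_ar {s} _.

Section Basic.
Context {L : signature}.

Fixpoint finmax (n : nat) : (Fin.t n -> nat) -> nat :=
  match n with
  | 0 => fun _ => 0
  | S n' => fun f => Nat.max (f Fin.F1) (@finmax n' (fun j => f (Fin.FS j)))
  end.
Arguments finmax {n} _.

Lemma finmax_ge n (j : Fin.t n) : forall f, f j <= finmax f.
Proof.
  induction j; intros f; simpl; [lia|].
  specialize (IHj (fun j => f (Fin.FS j))); simpl in IHj; lia.
Qed.

Fixpoint tbnd (t : term L) : nat :=
  match t with
  | tvar _ j => S j
  | tapp f ts => finmax (fun j => tbnd (ts j))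
  end.

Fixpoint fbnd (φ : formula L) : nat :=
  match φ with
  | f_false _ => 0
  | f_eq t1 t2 => Nat.max (tbnd t1) (tbnd t2)
  | f_rel r ts => finmax (fun j => tbnd (ts j))
  | f_imp a b => Nat.max (fbnd a) (fbnd b)
  | f_all n a => fbnd a
  end.

Lemma t_occurs_bnd t x : t_occurs x t -> x < tbnd t.
Proof.
  induction t as [j|f ts IH]; simpl; [lia|].
  intros [j Hj]. specialize (IH j Hj). pose proof (finmax_ge _ j (fun j => tbnd (ts j))). simpl in *; lia.
Qed.

Lemma occurs_bnd φ x : occurs_free x φ -> x < fbnd φ.
Proof.
  induction φ; simpl; try tauto.
  - intros [H|H]; apply t_occurs_bnd in H; lia.
  - intros [j Hj]. apply t_occurs_bnd in Hj. pose proof (finmax_ge _ j (fun j => tbnd (t j))). simpl in *; lia.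
  - intros [H|H]; [apply IHφ1 in H|apply IHφ2 in H]; lia.
Qed.

Lemma t_eval_coinc (M : structure L) t (v v' : nat -> M) :
  (forall x, t_occurs x t -> v x = v' x) -> t_eval v t = t_eval v' t.
Proof.
  induction t as [j|f ts IH]; simpl; intros H; [auto|].
  f_equal. apply functional_extensionality. intros j. apply IH. intros x Hx. apply H. exists j; auto.
Qed.

Lemma sat_coinc (M : structure L) φ : forall (v v' : nat -> M),
  (forall x, occurs_free x φ -> v x = v' x) -> (sat v φ <-> sat v' φ).
Proof.
  induction φ; simpl; intros v v' H.
  - tauto.
  - rewrite (t_eval_coinc M t v v'), (t_eval_coinc M t0 v v'); [tauto| |]; intros; apply H; auto.
  - replace (fun j => t_eval v (t j)) with (fun j => t_eval v' (t j)); [tauto|].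
    apply functional_extensionality; intros j; symmetry; apply t_eval_coinc; intros; apply H; eauto.
  - rewrite (IHφ1 v v'), (IHφ2 v v'); [tauto| |]; intros; apply H; auto.
  - split; intros Ha a; [rewrite <- (IHφ (upd v n a))|rewrite (IHφ (upd v n a) (upd v' n a))]; auto;
      intros x Hx; unfold upd; destruct (Nat.eqb_spec x n); auto; apply H; auto.
Qed.

Lemma sat_ext (M : structure L) φ (v v' : nat -> M) :
  (forall x, v x = v' x) -> (sat v φ <-> sat v' φ).
Proof. intros; apply sat_coinc; auto. Qed.

Lemma sat_bnd (M : structure L) φ (v v' : nat -> M) :
  (forall x, x < fbnd φ -> v x = v' x) -> (sat v φ <-> sat v' φ).
Proof. intros H; apply sat_coinc; intros x Hx; apply H, occurs_bnd; auto. Qed.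

Definition elem (A B : structure L) (f : A -> B) : Prop :=
  forall φ (v : nat -> A), sat v φ <-> sat (fun x => f (v x)) φ.
Arguments elem {A B} f.

Lemma elem_comp (A B C : structure L) (f : A -> B) (g : B -> C) :
  elem f -> elem g -> elem (fun x => g (f x)).
Proof. intros Hf Hg φ v. rewrite (Hf φ v). apply (Hg φ (fun x => f (v x))). Qed.

Lemma elem_inj (A B : structure L) (f : A -> B) : elem f -> forall x y, f x = f y -> x = y.
Proof.
  intros Hf x y Hxy.
  pose (v := fun n => match n with 0 => x | _ => y end).
  apply (Hf (f_eq (tvar L 0) (tvar L 1)) v). simpl. exact Hxy.
Qed.

Lemma sentence_sat (M : structure L) φ (v v' : nat -> M) : sentence φ -> (sat v φ <-> sat v' φ).
Proof. intros Hs; apply sat_coinc; intros x Hx; exfalso; exact (Hs x Hx). Qed.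

Lemma elem_model (T : theory L) (A B : structure L) (f : A -> B) :
  (forall ψ, T ψ -> sentence ψ) -> elem f -> is_model T A -> is_model T B.
Proof.
  intros Hs Hf HA ψ Hψ. unfold satS.
  apply (sentence_sat B ψ (fun _ => f (witness A))); auto.
  apply Hf, HA; auto.
Qed.

Lemma fin_to_of (n : nat) (j : Fin.t n) (h : proj1_sig (Fin.to_nat j) < n) :
  Fin.of_nat_lt h = j.
Proof.
  rewrite (Fin.of_nat_ext h (proj2_sig (Fin.to_nat j))). apply Fin.of_nat_to_nat_inv.
Qed.

Definition finval {A : Type} {n : nat} (a : Fin.t n -> A) (d : A) (x : nat) : A :=
  match lt_dec x n with left h => a (Fin.of_nat_lt h) | right _ => d end.

Lemma finval_to (A : Type) n (a : Fin.t n -> A) d j : finval a d (proj1_sig (Fin.to_nat j)) = a j.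
Proof.
  unfold finval. destruct (lt_dec _ n) as [h|h].
  - rewrite fin_to_of; auto.
  - exfalso; apply h; apply proj2_sig.
Qed.

Lemma finval_comp (A B : Type) n (a : Fin.t n -> A) d (f : A -> B) x :
  f (finval a d x) = finval (fun j => f (a j)) (f d) x.
Proof. unfold finval; destruct (lt_dec x n); auto. Qed.

Lemma elem_fun (A B : structure L) (f : A -> B) : elem f ->
  forall F (a : Fin.t (fun_ar F) -> A), f (fun_int A F a) = fun_int B F (fun j => f (a j)).
Proof.
  intros Hf F a.
  pose (n := fun_ar F).
  pose (v := fun x => if Nat.eqb x n then fun_int A F a else finval a (witness A) x).
  pose (ψ := f_eq (tapp F (fun j => tvar L (proj1_sig (Fin.to_nat j)))) (tvar L n)).
  assert (Hv : forall j, v (proj1_sig (Fin.to_nat j)) = a j).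
  { intros j. unfold v. pose proof (proj2_sig (Fin.to_nat j)) as Hj. simpl in Hj.
    destruct (Nat.eqb_spec (proj1_sig (Fin.to_nat j)) n); [unfold n in *; lia|]. apply finval_to. }
  assert (H : sat v ψ).
  { simpl. replace (v n) with (fun_int A F a) by (unfold v; rewrite Nat.eqb_refl; auto).
    f_equal. apply functional_extensionality; intros j. apply Hv. }
  apply Hf in H. simpl in H. replace (v n) with (fun_int A F a) in H by (unfold v; rewrite Nat.eqb_refl; auto).
  rewrite <- H. f_equal.
  apply functional_extensionality; intros j. rewrite Hv; auto.
Qed.

Lemma elem_rel (A B : structure L) (f : A -> B) : elem f ->
  forall R (a : Fin.t (rel_ar R) -> A), rel_int A R a <-> rel_int B R (fun j => f (a j)).
Proof.
  intros Hf R a.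
  pose (v := finval a (witness A)).
  pose (ψ := f_rel R (fun j => tvar L (proj1_sig (Fin.to_nat j)))).
  specialize (Hf ψ v). simpl in Hf.
  replace (fun j => v (proj1_sig (Fin.to_nat j))) with a in Hf
    by (apply functional_extensionality; intros j; unfold v; rewrite finval_to; auto).
  replace (fun j => f (v (proj1_sig (Fin.to_nat j)))) with (fun j => f (a j)) in Hf
    by (apply functional_extensionality; intros j; unfold v; rewrite finval_to; auto).
  exact Hf.
Qed.

Lemma aut_t_eval (M : structure L) (σ : automorphism M) t (v : nat -> M) :
  σ (t_eval v t) = t_eval (fun x => σ (v x)) t.
Proof.
  induction t as [j|F ts IH]; simpl; auto.
  rewrite aut_fun_hom. f_equal. apply functional_extensionality; auto.
Qed.

Lemma aut_elem (M : structure L) (σ : automorphism M) : elem (aut_fun σ).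
Proof.
  intros φ; induction φ; intros v; simpl.
  - tauto.
  - rewrite <- !aut_t_eval. split; [congruence|].
    intros H. rewrite <- (aut_inv_l σ (t_eval v t)), H. apply aut_inv_l.
  - rewrite (aut_rel_hom σ). replace (fun j => σ (t_eval v (t j))) with (fun j => t_eval (fun x => σ (v x)) (t j)); [tauto|].
    apply functional_extensionality; intros; rewrite aut_t_eval; auto.
  - rewrite IHφ1, IHφ2; tauto.
  - split; intros H a.
    + specialize (H (aut_inv σ a)). rewrite IHφ in H. revert H; apply sat_ext.
      intros x; unfold upd; destruct (x =? n); auto. symmetry; apply aut_inv_r.
    + rewrite IHφ. specialize (H (σ a)). revert H; apply sat_ext.
      intros x; unfold upd; destruct (x =? n); auto.
Qed.

Definition mk_aut {M : structure L} (f g : M -> M) (Hl : forall x, g (f x) = x)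
  (Hr : forall x, f (g x) = x) (He : elem f) : automorphism M :=
  Aut M f g Hl Hr (elem_fun M M f He) (elem_rel M M f He).

End Basic.
Arguments elem {L A B} f.
Arguments finmax {n} _.
Arguments finval {A n} a d x.
Arguments mk_aut {L M} f g Hl Hr He.

Section Pow.
Local Open Scope Z_scope.
Context {L : signature} {M : structure L} (σ : automorphism M).

Lemma pos_iter_nat (f : M -> M) x p : Pos.iter f x p = Nat.iter (Pos.to_nat p) f x.
Proof.
  induction p using Pos.peano_ind; [reflexivity|].
  rewrite Pos.iter_succ, Pos2Nat.inj_succ, IHp. reflexivity.
Qed.

Lemma pow_nat n x : aut_pow σ (Z.of_nat n) x = Nat.iter n (aut_fun σ) x.
Proof. destruct n; [reflexivity|]. simpl. rewrite pos_iter_nat, SuccNat2Pos.id_succ. reflexivity. Qed.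

Lemma pow_negnat n x : aut_pow σ (- Z.of_nat n) x = Nat.iter n (aut_inv σ) x.
Proof. destruct n; [reflexivity|]. simpl. rewrite pos_iter_nat, SuccNat2Pos.id_succ. reflexivity. Qed.

Lemma Z_cases (z : Z) : exists n, z = Z.of_nat n \/ z = - Z.of_nat n.
Proof. exists (Z.to_nat (Z.abs z)). lia. Qed.

Lemma pow_succ z x : aut_pow σ (z + 1) x = σ (aut_pow σ z x).
Proof.
  destruct (Z_cases z) as [n [->| ->]].
  - replace (Z.of_nat n + 1)%Z with (Z.of_nat (S n)) by lia. rewrite !pow_nat. reflexivity.
  - destruct n as [|n].
    + simpl. reflexivity.
    + replace (- Z.of_nat (S n) + 1)%Z with (- Z.of_nat n)%Z by lia. rewrite !pow_negnat.
      simpl. rewrite aut_inv_r. reflexivity.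
Qed.

Lemma pow_pred z x : aut_pow σ (z - 1) x = aut_inv σ (aut_pow σ z x).
Proof.
  destruct (Z_cases z) as [n [->| ->]].
  - destruct n as [|n].
    + simpl. reflexivity.
    + replace (Z.of_nat (S n) - 1)%Z with (Z.of_nat n) by lia. rewrite !pow_nat.
      simpl. rewrite aut_inv_l. reflexivity.
  - replace (- Z.of_nat n - 1)%Z with (- Z.of_nat (S n))%Z by lia. rewrite !pow_negnat. reflexivity.
Qed.

Lemma pow_add a b x : aut_pow σ (a + b) x = aut_pow σ a (aut_pow σ b x).
Proof.
  induction a using Z.peano_ind.
  - reflexivity.
  - replace (Z.succ a + b)%Z with ((a + b) + 1)%Z by lia. unfold Z.succ.
    rewrite !pow_succ, IHa. reflexivity.
  - replace (Z.pred a + b)%Z with ((a + b) - 1)%Z by lia. unfold Z.pred.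
    replace (a + -1)%Z with (a - 1)%Z by lia.
    rewrite !pow_pred, IHa. reflexivity.
Qed.

Lemma pow_inv z x : aut_pow σ (- z) (aut_pow σ z x) = x.
Proof. rewrite <- pow_add. replace (- z + z)%Z with 0%Z by lia. reflexivity. Qed.

Lemma inv_elem : elem (aut_inv σ).
Proof.
  intros φ v. rewrite (aut_elem M σ φ (fun x => aut_inv σ (v x))).
  apply sat_ext. intros x. rewrite aut_inv_r. reflexivity.
Qed.

Lemma iter_elem (f : M -> M) n : elem f -> elem (Nat.iter n f).
Proof.
  intros Hf. induction n; simpl; intros φ v.
  - apply sat_ext; reflexivity.
  - rewrite (IHn φ v). apply (Hf φ (fun x => Nat.iter n f (v x))).
Qed.

Lemma pow_elem z : elem (aut_pow σ z).
Proof.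
  destruct (Z_cases z) as [n [->| ->]]; intros φ v.
  - rewrite (iter_elem _ n (aut_elem M σ) φ v). apply sat_ext; intros; rewrite pow_nat; auto.
  - rewrite (iter_elem _ n inv_elem φ v). apply sat_ext; intros; rewrite pow_negnat; auto.
Qed.

End Pow.

Record ultra {I : Type} (U : (I -> Prop) -> Prop) : Prop := {
  uT : U (fun _ => True);
  uS : forall A B : I -> Prop, (forall i, A i -> B i) -> U A -> U B;
  uI : forall A B, U A -> U B -> U (fun i => A i /\ B i);
  uN : ~ U (fun _ => False);
  uC : forall A, U A \/ U (fun i => ~ A i) }.

Lemma ultra_exists {I : Type} (B : (I -> Prop) -> Prop) :
  (forall l, (forall X, In X l -> B X) -> exists i, forall X, In X l -> X i) ->
  exists U, ultra U /\ forall X, B X -> U X.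
Proof.
  intros HB.
  pose (F := fun X : I -> Prop => exists l, (forall Y, In Y l -> B Y) /\ forall i, (forall Y, In Y l -> Y i) -> X i).
  assert (FF : filter.Filter F).
  { constructor.
    - exists nil. split; [intros Y []|]. intros; constructor.
    - intros P Q [l1 [H1 H1']] [l2 [H2 H2']]. exists (l1 ++ l2). split.
      + intros Y HY; apply in_app_or in HY; destruct HY; auto.
      + intros i Hi. split; [apply H1'|apply H2']; intros Y HY; apply Hi, in_or_app; auto.
    - intros P Q HPQ [l [H1 H2]]. exists l; split; auto. }
  assert (PF : filter.ProperFilter F).
  { constructor. intros [l [H1 H2]]. destruct (HB l H1) as [i Hi]. exact (H2 i Hi). exact FF. }
  destruct (filter.ultraFilterLemma PF) as [G [HG HFG]].
  exists G. split.
  - pose proof (@filter.ultra_proper _ G HG) as PG.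
    pose proof (@filter.filter_not_empty _ G PG) as NE.
    pose proof (@filter.filter_filter _ G PG) as FG.
    split.
    + exact (@filter.filterT _ G FG).
    + intros A B0 HAB HA. exact (@filter.filterS _ G FG A B0 HAB HA).
    + intros A B0 HA HB0. exact (@filter.filterI _ G FG A B0 HA HB0).
    + exact NE.
    + intros A. exact (filter.in_ultra_setVsetC A HG).
  - intros X HX. apply HFG. exists (X :: nil). split.
    + intros Y [<-|[]]; auto.
    + intros i Hi; apply Hi; left; auto.
Qed.

Section Quot.
Context {X : Type@{structure.u0}} (R : X -> X -> Prop) (Rrefl : forall x, R x x)
  (Rsym : forall x y, R x y -> R y x) (Rtrans : forall x y z, R x y -> R y z -> R x z).

Definition canonP (P : X -> Prop) (H : exists y, P y) : X :=
  proj1_sig (constructive_indefinite_description P H).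

Lemma canonP_spec P H : P (canonP P H).
Proof. unfold canonP. apply proj2_sig. Qed.

Lemma canonP_eq P P' H H' : P = P' -> canonP P H = canonP P' H'.
Proof. intros <-. f_equal. apply proof_irrelevance. Qed.

Definition canon (x : X) : X := canonP (R x) (ex_intro _ x (Rrefl x)).

Lemma canon_R x : R x (canon x).
Proof. apply (canonP_spec (R x)). Qed.

Lemma canon_eq x y : R x y -> canon x = canon y.
Proof.
  intros H. apply canonP_eq. apply functional_extensionality; intros z.
  apply propositional_extensionality; split; intros; eauto.
Qed.

Lemma canon_idem x : canon (canon x) = canon x.
Proof. symmetry. apply canon_eq. apply canon_R. Qed.

Definition quot : Type@{structure.u0} := { x : X | canon x = x }.
Definition cls (x : X) : quot := exist _ (canon x) (canon_idem x).
Definition rep (q : quot) : X := proj1_sig q.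

Lemma cls_eq x y : cls x = cls y <-> R x y.
Proof.
  split.
  - intros H. apply (f_equal rep) in H. simpl in H.
    apply Rtrans with (canon x); [apply canon_R|]. rewrite H. apply Rsym, canon_R.
  - intros H. unfold cls. apply eq_sig_hprop; [intros; apply proof_irrelevance|]. simpl. apply canon_eq; auto.
Qed.

Lemma rep_cls x : R (rep (cls x)) x.
Proof. simpl. apply Rsym, canon_R. Qed.

Lemma cls_rep q : cls (rep q) = q.
Proof.
  destruct q as [x Hx]. unfold cls. apply eq_sig_hprop; [intros; apply proof_irrelevance|]. simpl. auto.
Qed.

End Quot.

Lemma fin_all_dec {n : nat} (P : Fin.t n -> Prop) : (forall j, P j) \/ exists j, ~ P j.
Proof.
  destruct (classic (exists j, ~ P j)); auto. left; intros j. apply NNPP. intros Hn; apply H; eauto.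
Qed.

Lemma u_fin {I : Type} {U : (I -> Prop) -> Prop} (HU : ultra U) :
  forall n (P : Fin.t n -> I -> Prop), (forall j, U (P j)) -> U (fun i => forall j, P j i).
Proof.
  induction n; intros P H.
  - apply (uS _ HU (fun _ => True)); [intros i _ j; inversion j|apply uT, HU].
  - specialize (IHn (fun j => P (Fin.FS j)) (fun j => H (Fin.FS j))).
    apply (uS _ HU (fun i => P Fin.F1 i /\ forall j, P (Fin.FS j) i)); [|apply uI; auto].
    intros i [H1 H2] j. clear IHn. revert P H H1 H2. pattern j. apply Fin.caseS'; auto.
Qed.

Lemma u_imp {I : Type} {U : (I -> Prop) -> Prop} (HU : ultra U) (A B : I -> Prop) :
  U (fun i => A i -> B i) <-> (U A -> U B).
Proof.
  split.
  - intros H HA. apply (uS _ HU (fun i => (A i -> B i) /\ A i)); [intros i [h1 h2]; auto|apply uI; auto].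
  - intros H. destruct (uC _ HU A) as [HA|HA].
    + apply (uS _ HU B); auto.
    + apply (uS _ HU (fun i => ~ A i)); auto. intros i h1 h2; contradiction.
Qed.

Lemma u_const {I : Type} {U : (I -> Prop) -> Prop} (HU : ultra U) (P : Prop) : U (fun _ => P) <-> P.
Proof.
  split.
  - intros H. apply NNPP; intros HP. apply (uN _ HU). apply (uS _ HU (fun _ => P)); auto.
  - intros HP. apply (uS _ HU (fun _ => True)); auto. apply uT, HU.
Qed.

Lemma u_and {I : Type} {U : (I -> Prop) -> Prop} (HU : ultra U) (A B : I -> Prop) :
  U (fun i => A i /\ B i) <-> U A /\ U B.
Proof.
  split.
  - intros H; split; apply (uS _ HU _ _ (fun i h => proj1 h) H) || apply (uS _ HU _ _ (fun i h => proj2 h) H).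
  - intros [H1 H2]; apply uI; auto.
Qed.

Section Ult.
Context {L : signature} (A : structure L) {I : Type@{structure.u0}} (U : (I -> Prop) -> Prop) (HU : ultra U).

Definition uR (f g : I -> A) : Prop := U (fun i => f i = g i).
Lemma uR_refl f : uR f f.
Proof. unfold uR. apply (uS _ HU (fun _ => True)); auto. apply uT, HU. Qed.
Lemma uR_sym f g : uR f g -> uR g f.
Proof. unfold uR. apply uS; auto. Qed.
Lemma uR_trans f g h : uR f g -> uR g h -> uR f h.
Proof. unfold uR. intros H1 H2. apply (uS _ HU (fun i => f i = g i /\ g i = h i)); [intros i [-> ->]; auto|apply uI; auto]. Qed.

Definition UQ : Type@{structure.u0} := quot uR uR_refl.
Definition ucls (f : I -> A) : UQ := cls uR uR_refl uR_sym uR_trans f.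
Definition urep (q : UQ) : I -> A := rep uR uR_refl q.

Lemma ucls_eq f g : ucls f = ucls g <-> uR f g.
Proof. apply (cls_eq uR uR_refl uR_sym uR_trans). Qed.
Lemma urep_cls f : uR (urep (ucls f)) f.
Proof. apply (rep_cls uR uR_refl uR_sym uR_trans). Qed.
Lemma ucls_rep q : ucls (urep q) = q.
Proof. apply (cls_rep uR uR_refl uR_sym uR_trans). Qed.

Definition Ult : structure L :=
  @Structure L UQ (ucls (fun _ => witness A))
    (fun F a => ucls (fun i => fun_int A F (fun j => urep (a j) i)))
    (fun Rl a => U (fun i => rel_int A Rl (fun j => urep (a j) i))).

Lemma ult_fin n (g : Fin.t n -> I -> A) :
  U (fun i => forall j, urep (ucls (g j)) i = g j i).
Proof. apply u_fin; auto. intros j; apply urep_cls. Qed.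

Lemma ult_term (r : nat -> I -> A) t :
  @t_eval L Ult (fun x => ucls (r x)) t = ucls (fun i => t_eval (fun x => r x i) t).
Proof.
  induction t as [x|F ts IH]; simpl; [reflexivity|].
  assert (E : (fun j => @t_eval L Ult (fun x => ucls (r x)) (ts j)) =
              (fun j => ucls (fun i => t_eval (fun x => r x i) (ts j))))
    by (apply functional_extensionality; intros; apply IH).
  change (ucls (fun i => fun_int A F (fun j => urep ((fun j => @t_eval L Ult (fun x => ucls (r x)) (ts j)) j) i))
          = ucls (fun i => fun_int A F (fun j => t_eval (fun x => r x i) (ts j)))).
  rewrite E. apply ucls_eq. unfold uR.
  eapply (uS _ HU); [|exact (ult_fin _ (fun j i => t_eval (fun x => r x i) (ts j)))].
  intros i h. simpl in h. f_equal. apply functional_extensionality; intros j; apply h.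
Qed.

Lemma los φ : forall rr : nat -> I -> A,
  @sat L Ult (fun x => ucls (rr x)) φ <-> U (fun i => sat (fun x => rr x i) φ).
Proof.
  induction φ as [| t1 t2 | Rl ts | φ1 IH1 φ2 IH2 | n φ IH]; intros rr; simpl.
  - split; [tauto|]. apply uN, HU.
  - rewrite !ult_term. rewrite ucls_eq. tauto.
  - assert (E: (fun j => @t_eval L Ult (fun x => ucls (rr x)) (ts j)) =
               (fun j => ucls (fun i => t_eval (fun x => rr x i) (ts j))))
      by (apply functional_extensionality; intros; apply ult_term).
    change (U (fun i => rel_int A Rl (fun j => urep ((fun j => @t_eval L Ult (fun x => ucls (rr x)) (ts j)) j) i)) <->
            U (fun i => rel_int A Rl (fun j => t_eval (fun x => rr x i) (ts j)))).
    rewrite E.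
    pose proof (ult_fin _ (fun j i => t_eval (fun x => rr x i) (ts j))) as Hf.
    split; intros H; (eapply (uS _ HU); [|exact (uI _ HU _ _ Hf H)]); intros i h.
    + destruct h as [h1 h2].
      replace (fun j => t_eval (fun x => rr x i) (ts j)) with
        (fun j => urep (ucls (fun i0 => t_eval (fun x => rr x i0) (ts j))) i); auto.
      apply functional_extensionality; auto.
    + destruct h as [h1 h2].
      replace (fun j => urep (ucls (fun i0 => t_eval (fun x => rr x i0) (ts j))) i) with
        (fun j => t_eval (fun x => rr x i) (ts j)); auto.
      apply functional_extensionality; auto.
  - rewrite IH1, IH2. symmetry. apply u_imp, HU.
  - assert (Hupd : forall (q : UQ) , (forall x, @upd L Ult (fun x => ucls (rr x)) n q x =
               ucls ((fun x => if Nat.eqb x n then urep q else rr x) x))).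
    { intros q x. unfold upd. destruct (Nat.eqb x n); auto. symmetry; apply ucls_rep. }
    split.
    + intros H. apply NNPP. intros Hn.
      destruct (uC _ HU (fun i => forall a : A, sat (upd (fun x => rr x i) n a) φ)) as [Hc|Hc]; [contradiction|].
      pose (g := fun i => match excluded_middle_informative (exists a : A, ~ sat (upd (fun x => rr x i) n a) φ) with
                          | left h => proj1_sig (constructive_indefinite_description _ h)
                          | right _ => witness A end).
      specialize (H (ucls g)). rewrite (sat_ext _ _ _ _ (Hupd (ucls g))) in H. rewrite IH in H.
      apply (uN _ HU). eapply (uS _ HU); [|exact (uI _ HU _ _ (uI _ HU _ _ H Hc) (urep_cls g))].
      intros i [[h1 h2] h3]. simpl in *. apply h2. intros a.
      apply NNPP; intros Hna.
      assert (Hg : ~ sat (upd (fun x => rr x i) n (g i)) φ).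
      { unfold g. destruct (excluded_middle_informative _) as [h|h].
        - apply (proj2_sig (constructive_indefinite_description _ h)).
        - exfalso; apply h; eauto. }
      apply Hg. revert h1. apply sat_ext. intros x. unfold upd. destruct (Nat.eqb x n); auto.
    + intros H q. rewrite (sat_ext _ _ _ _ (Hupd q)). rewrite IH.
      eapply (uS _ HU); [|exact H]. intros i h; simpl in h.
      specialize (h (urep q i)). revert h. apply sat_ext. intros x. unfold upd. destruct (Nat.eqb x n); auto.
Qed.

Definition udiag (a : A) : Ult := ucls (fun _ => a).

Lemma udiag_elem : elem udiag.
Proof.
  intros φ v. unfold udiag. rewrite (los φ (fun x _ => v x)). symmetry. apply u_const, HU.
Qed.

Lemma los_gen φ (v : nat -> Ult) (rr : nat -> I -> A) :
  (forall x, v x = ucls (rr x)) -> (sat v φ <-> U (fun i => sat (fun x => rr x i) φ)).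
Proof. intros H. rewrite (sat_ext _ _ _ _ H). apply los. Qed.

End Ult.

Lemma u_list {I : Type} {U : (I -> Prop) -> Prop} (HU : ultra U) {X : Type} (l : list X) (P : X -> I -> Prop) :
  (forall x, In x l -> U (P x)) -> U (fun i => forall x, In x l -> P x i).
Proof.
  induction l as [|a l IH]; intros H.
  - apply (uS _ HU (fun _ => True)); [intros i _ x []|apply uT, HU].
  - apply (uS _ HU (fun i => P a i /\ forall x, In x l -> P x i)).
    + intros i [h1 h2] x [<-|hx]; auto.
    + apply uI; auto. apply H; left; auto. apply IH; intros; apply H; right; auto.
Qed.

(* realization of finitely satisfiable conditions in an ultrapower, representative form *)
Lemma realize {L : signature} (A : structure L) (V : Type@{structure.u0})
  (C : ((V -> A) -> Prop) -> Prop) :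
  (forall l, (forall c, In c l -> C c) -> exists e : V -> A, forall c, In c l -> c e) ->
  exists (I : Type@{structure.u0}) (U : (I -> Prop) -> Prop), ultra U /\
    exists e : V -> I -> A, forall c, C c -> U (fun i => c (fun v => e v i)).
Proof.
  intros Hfin.
  pose (I := list ((V -> A) -> Prop)).
  pose (ee := fun i : I => match excluded_middle_informative (exists e : V -> A, forall c, In c i -> c e) with
                          | left h => proj1_sig (constructive_indefinite_description _ h)
                          | right _ => fun _ => witness A end).
  pose (X := fun c (i : I) => (forall c', In c' i -> C c') /\ In c i).
  destruct (ultra_exists (fun Y => exists c, C c /\ Y = X c)) as [U [HU HUX]].
  { intros l Hl.
    assert (Hex : exists i : I, (forall c', In c' i -> C c') /\ forall Y, In Y l -> exists c, In c i /\ Y = X c).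
    { induction l as [|Y l IH].
      - exists nil. split; [intros _ []|intros _ []].
      - destruct IH as [i [Hi1 Hi2]]; [intros; apply Hl; right; auto|].
        destruct (Hl Y (or_introl eq_refl)) as [c [Hc ->]].
        exists (c :: i). split.
        + intros c' [<-|h]; auto.
        + intros Y' [<-|h]; [exists c; split; [left|]; auto|].
          destruct (Hi2 Y' h) as [c' [h1 h2]]. exists c'; split; [right|]; auto. }
    destruct Hex as [i [Hi1 Hi2]]. exists i. intros Y HY. destruct (Hi2 Y HY) as [c [h1 ->]].
    unfold X; split; auto. }
  exists I, U. split; auto. exists (fun v i => ee i v).
  intros c Hc. eapply (uS _ HU); [|apply HUX; exists c; split; eauto].
  intros i [Hi1 Hi2]. unfold ee. destruct (excluded_middle_informative _) as [h|h].
  - apply (proj2_sig (constructive_indefinite_description _ h)); auto.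
  - exfalso. apply h. apply Hfin; auto.
Qed.

Fixpoint finmax_nat (b : nat) (f : nat -> nat) : nat :=
  match b with 0 => 0 | S b' => Nat.max (f b') (finmax_nat b' f) end.
Lemma finmax_nat_ge b f x : x < b -> f x <= finmax_nat b f.
Proof. induction b; simpl; intros H; [lia|]. destruct (Nat.eq_dec x b); [subst; lia|]. specialize (IHb ltac:(lia)); lia. Qed.

(* direct limit of a self-embedding *)
Section Lim2.
Context {L : signature} (B : structure L) (H : B -> B) (HH : elem H).

Definition HI (n : nat) (x : B) : B := Nat.iter n H x.

Lemma HI_add a b x : HI (a + b) x = HI a (HI b x).
Proof. unfold HI. apply Nat.iter_add. Qed.
Lemma HI_comm a b x : HI a (HI b x) = HI b (HI a x).
Proof. rewrite <- !HI_add, Nat.add_comm; auto. Qed.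
Lemma HI_elem n : elem (HI n).
Proof. apply iter_elem; auto. Qed.
Lemma HI_inj n x y : HI n x = HI n y -> x = y.
Proof. apply elem_inj, HI_elem. Qed.
Lemma HI_S n x : HI (S n) x = H (HI n x).
Proof. reflexivity. Qed.
Lemma HI_S' n x : HI (S n) x = HI n (H x).
Proof. replace (S n) with (n + 1) by lia. rewrite HI_add. reflexivity. Qed.

Definition lR (p q : nat * B) : Prop := HI (fst q) (snd p) = HI (fst p) (snd q).
Lemma lR_refl p : lR p p. Proof. reflexivity. Qed.
Lemma lR_sym p q : lR p q -> lR q p. Proof. unfold lR; auto. Qed.
Lemma lR_trans p q r : lR p q -> lR q r -> lR p r.
Proof.
  unfold lR. destruct p as [a x], q as [b y], r as [c z]; simpl. intros H1 H2.
  apply (HI_inj b). rewrite (HI_comm b c), H1, (HI_comm c a), H2, HI_comm. reflexivity.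
Qed.

Definition LQ : Type@{structure.u0} := quot lR lR_refl.
Definition lcls (p : nat * B) : LQ := cls lR lR_refl lR_sym lR_trans p.
Definition lrep (q : LQ) : nat * B := rep lR lR_refl q.
Lemma lcls_eq p q : lcls p = lcls q <-> lR p q.
Proof. apply (cls_eq lR lR_refl lR_sym lR_trans). Qed.
Lemma lrep_cls p : lR (lrep (lcls p)) p.
Proof. apply (rep_cls lR lR_refl lR_sym lR_trans). Qed.
Lemma lcls_rep q : lcls (lrep q) = q.
Proof. apply (cls_rep lR lR_refl lR_sym lR_trans). Qed.

Definition lift (p : nat * B) (n : nat) : B := HI (n - fst p) (snd p).

Lemma lift_R p q n : lR p q -> fst p <= n -> fst q <= n -> lift p n = lift q n.
Proof.
  unfold lR, lift. destruct p as [a x], q as [b y]; simpl. intros E Ha Hb.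
  apply (HI_inj (a + b)).
  rewrite <- !HI_add.
  replace (a + b + (n - a)) with (n + b) by lia. replace (a + b + (n - b)) with (n + a) by lia.
  rewrite !HI_add, E, HI_comm. reflexivity.
Qed.

Lemma lR_lift p n : fst p <= n -> lR p (n, lift p n).
Proof.
  unfold lR, lift. destruct p as [a x]; simpl. intros Ha. rewrite <- HI_add. f_equal. lia.
Qed.

Lemma lift_up p n n' : fst p <= n -> n <= n' -> lift p n' = HI (n' - n) (lift p n).
Proof. unfold lift; intros; rewrite <- HI_add. f_equal. lia. Qed.

Definition Lim : structure L :=
  @Structure L LQ (lcls (0, witness B))
    (fun F a => let n := finmax (fun j => fst (lrep (a j))) in
                lcls (n, fun_int B F (fun j => lift (lrep (a j)) n)))
    (fun Rl a => let n := finmax (fun j => fst (lrep (a j))) in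
                 rel_int B Rl (fun j => lift (lrep (a j)) n)).

Lemma HI_fun n F (a : Fin.t (fun_ar F) -> B) : HI n (fun_int B F a) = fun_int B F (fun j => HI n (a j)).
Proof. apply elem_fun, HI_elem. Qed.

Lemma lim_term (r : nat -> nat * B) t n :
  (forall x, x < tbnd t -> fst (r x) <= n) ->
  @t_eval L Lim (fun x => lcls (r x)) t = lcls (n, t_eval (fun x => lift (r x) n) t).
Proof.
  induction t as [x|F ts IH]; simpl; intros Hb.
  - apply lcls_eq. apply lR_lift. apply Hb. lia.
  - assert (E : forall j, @t_eval L Lim (fun x => lcls (r x)) (ts j) = lcls (n, t_eval (fun x => lift (r x) n) (ts j))).
    { intros j. apply IH. intros x Hx. apply Hb. pose proof (finmax_ge _ j (fun j => tbnd (ts j))). simpl in *; lia. }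
    change (lcls (finmax (fun j => fst (lrep (@t_eval L Lim (fun x => lcls (r x)) (ts j)))),
              fun_int B F (fun j => lift (lrep (@t_eval L Lim (fun x => lcls (r x)) (ts j)))
                (finmax (fun j => fst (lrep (@t_eval L Lim (fun x => lcls (r x)) (ts j)))))))
      = lcls (n, fun_int B F (fun j => t_eval (fun x => lift (r x) n) (ts j)))).
    set (n0 := finmax (fun j => fst (lrep (@t_eval L Lim (fun x => lcls (r x)) (ts j))))).
    apply lcls_eq. unfold lR. simpl. rewrite !HI_fun. f_equal. apply functional_extensionality; intros j.
    set (p := lrep (@t_eval L Lim (fun x => lcls (r x)) (ts j))).
    assert (Hp : fst p <= n0).
    { unfold n0, p. apply (finmax_ge _ j (fun j => fst (lrep (@t_eval L Lim (fun x => lcls (r x)) (ts j))))). }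
    transitivity (lift p (n0 + n)).
    { rewrite (lift_up p n0 (n0 + n)); [f_equal; lia|auto|lia]. }
    rewrite (lift_R p (n, t_eval (fun x => lift (r x) n) (ts j)) (n0 + n)).
    + unfold lift; simpl. f_equal. lia.
    + unfold p. rewrite E. apply lrep_cls.
    + lia.
    + simpl; lia.
Qed.

Lemma fbnd_t1 (t1 t2 : term L) : tbnd t1 <= fbnd (f_eq t1 t2). Proof. simpl; lia. Qed.

Lemma lim_los φ : forall (r : nat -> nat * B) n,
  (forall x, x < fbnd φ -> fst (r x) <= n) ->
  (@sat L Lim (fun x => lcls (r x)) φ <-> sat (fun x => lift (r x) n) φ).
Proof.
  induction φ as [| t1 t2 | Rl ts | φ1 IH1 φ2 IH2 | y φ IH]; intros r n Hb; simpl in *.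
  - tauto.
  - rewrite (lim_term r t1 n), (lim_term r t2 n); try (intros; apply Hb; lia).
    rewrite lcls_eq. unfold lR; simpl. split; [apply HI_inj|congruence].
  - assert (E : forall j, @t_eval L Lim (fun x => lcls (r x)) (ts j) = lcls (n, t_eval (fun x => lift (r x) n) (ts j))).
    { intros j. apply lim_term. intros x Hx. apply Hb. pose proof (finmax_ge _ j (fun j => tbnd (ts j))). simpl in *; lia. }
    change (rel_int B Rl (fun j => lift (lrep (@t_eval L Lim (fun x => lcls (r x)) (ts j)))
               (finmax (fun j => fst (lrep (@t_eval L Lim (fun x => lcls (r x)) (ts j)))))) <->
            rel_int B Rl (fun j => t_eval (fun x => lift (r x) n) (ts j))).
    set (n0 := finmax (fun j => fst (lrep (@t_eval L Lim (fun x => lcls (r x)) (ts j))))).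
    rewrite (elem_rel _ _ _ (HI_elem n)). rewrite (elem_rel _ _ _ (HI_elem n0) Rl (fun j => t_eval _ (ts j))).
    match goal with |- rel_int B Rl ?a <-> rel_int B Rl ?b => replace a with b; [tauto|] end.
    apply functional_extensionality; intros j.
    set (p := lrep (@t_eval L Lim (fun x => lcls (r x)) (ts j))).
    assert (Hp : fst p <= n0).
    { unfold n0, p. apply (finmax_ge _ j (fun j => fst (lrep (@t_eval L Lim (fun x => lcls (r x)) (ts j))))). }
    transitivity (lift p (n0 + n)).
    2:{ rewrite (lift_up p n0 (n0 + n)); [f_equal; lia|auto|lia]. }
    rewrite (lift_R p (n, t_eval (fun x => lift (r x) n) (ts j)) (n0 + n)).
    + unfold lift; simpl. f_equal. lia.
    + unfold p. rewrite E. apply lrep_cls.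
    + lia.
    + simpl; lia.
  - rewrite (IH1 r n), (IH2 r n); try tauto; intros; apply Hb; lia.
  - split.
    + intros Hall a.
      specialize (Hall (lcls (n, a))).
      rewrite (sat_ext Lim _ _ (fun x => lcls ((fun x => if Nat.eqb x y then (n, a) else r x) x))) in Hall.
      2:{ intros x; unfold upd; destruct (Nat.eqb x y); auto. }
      rewrite (IH _ n) in Hall.
      2:{ intros x Hx. destruct (Nat.eqb x y); simpl; auto. }
      revert Hall. apply sat_ext. intros x; unfold upd; destruct (Nat.eqb x y); auto.
      unfold lift; simpl. replace (n - n) with 0 by lia. reflexivity.
    + intros Hall q.
      set (n' := Nat.max n (fst (lrep q))).
      rewrite (sat_ext Lim _ _ (fun x => lcls ((fun x => if Nat.eqb x y then lrep q else r x) x))).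
      2:{ intros x; unfold upd; destruct (Nat.eqb x y); auto. symmetry; apply lcls_rep. }
      rewrite (IH _ n').
      2:{ intros x Hx. destruct (Nat.eqb x y); simpl. unfold n'; lia. specialize (Hb x Hx). unfold n'; lia. }
      assert (H' : sat (fun x => lift (r x) n') (f_all y φ)).
      { apply (sat_bnd _ _ (fun x => HI (n' - n) (lift (r x) n))).
        - intros x Hx. simpl in Hx. symmetry. apply lift_up; [apply Hb; auto|unfold n'; lia].
        - apply (proj1 (HI_elem (n' - n) (f_all y φ) (fun x => lift (r x) n))). exact Hall. }
      simpl in H'. specialize (H' (lift (lrep q) n')). revert H'. apply sat_ext.
      intros x; unfold upd; destruct (Nat.eqb x y); auto.
Qed.

Definition limi (x : B) : Lim := lcls (0, x).

Lemma limi_elem : elem limi.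
Proof.
  intros φ v. unfold limi. rewrite (lim_los φ (fun x => (0, v x)) 0); [|intros; simpl; lia].
  apply sat_ext. intros x; unfold lift; simpl. reflexivity.
Qed.

Definition lsig (q : Lim) : Lim := lcls (fst (lrep q), H (snd (lrep q))).
Definition lsiginv (q : Lim) : Lim := lcls (S (fst (lrep q)), snd (lrep q)).

Lemma lR_H p q : lR p q -> lR (fst p, H (snd p)) (fst q, H (snd q)).
Proof. unfold lR; simpl. intros E. rewrite <- !HI_S', !HI_S. f_equal. exact E. Qed.

Lemma lR_S p q : lR p q -> lR (S (fst p), snd p) (S (fst q), snd q).
Proof. unfold lR; cbn [fst snd]. intros E. rewrite !HI_S, E. reflexivity. Qed.

Lemma lsig_cls p : lsig (lcls p) = lcls (fst p, H (snd p)).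
Proof. unfold lsig. apply lcls_eq. apply lR_H. apply lrep_cls. Qed.

Lemma lsiginv_cls p : lsiginv (lcls p) = lcls (S (fst p), snd p).
Proof. unfold lsiginv. apply lcls_eq. apply lR_S. apply lrep_cls. Qed.

Lemma lsig_inv_r q : lsig (lsiginv q) = q.
Proof.
  rewrite <- (lcls_rep q). rewrite lsiginv_cls, lsig_cls. simpl. apply lcls_eq. unfold lR; simpl.
  rewrite <- HI_S', HI_S. reflexivity.
Qed.

Lemma lsig_inv_l q : lsiginv (lsig q) = q.
Proof.
  rewrite <- (lcls_rep q). rewrite lsig_cls, lsiginv_cls. simpl. apply lcls_eq. unfold lR; simpl.
  rewrite <- HI_S', HI_S. reflexivity.
Qed.

Lemma lsig_elem : elem lsig.
Proof.
  intros φ v.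
  pose (n := finmax_nat (fbnd φ) (fun x => fst (lrep (v x)))).
  assert (Hn : forall x, x < fbnd φ -> fst (lrep (v x)) <= n) by (intros x Hx; apply (finmax_nat_ge _ (fun x => fst (lrep (v x)))); auto).
  rewrite (sat_ext Lim _ _ (fun x => lcls (lrep (v x)))) by (intros; symmetry; apply lcls_rep).
  rewrite (lim_los φ _ n Hn).
  rewrite (sat_ext Lim _ (fun x => lsig (v x)) (fun x => lcls (fst (lrep (v x)), H (snd (lrep (v x)))))) by reflexivity.
  rewrite (lim_los φ _ n); [|intros; simpl; apply Hn; auto].
  rewrite (HH φ). apply sat_ext. intros x. unfold lift; simpl. rewrite <- HI_S, HI_S'. reflexivity.
Qed.

Lemma lsig_limi x : lsig (limi x) = limi (H x).
Proof. unfold limi. rewrite lsig_cls. reflexivity. Qed.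

End Lim2.

Section Lim1.
Context {L : signature} (N0 : structure L) {I : Type@{structure.u0}} (U : (I -> Prop) -> Prop) (HU : ultra U)
  (h : N0 -> I -> N0) (Eh : forall φ (v : nat -> N0), sat v φ <-> U (fun i => sat (fun x => h (v x) i) φ)).

Fixpoint Q (n : nat) (P : list I -> Prop) : Prop :=
  match n with 0 => P nil | S n' => U (fun i => Q n' (fun l => P (l ++ i :: nil))) end.

Lemma Q_ultra n : ultra (Q n).
Proof.
  induction n as [|n IH]; constructor; simpl.
  - constructor.
  - intros A B H; apply H.
  - intros A B HA HB; split; auto.
  - auto.
  - intros A. apply classic.
  - apply (uS _ HU (fun _ => True)); [intros; apply uT, IH|apply uT, HU].
  - intros A B H. apply uS; auto. intros i. apply uS; auto.
  - intros A B HA HB. eapply (uS _ HU); [|exact (uI _ HU _ _ HA HB)]. intros i [h1 h2]. apply uI; auto.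
  - intros H. apply (uN _ HU). eapply (uS _ HU); [|exact H]. intros i. apply uN, IH.
  - intros A. destruct (uC _ HU (fun i => Q n (fun l => A (l ++ i :: nil)))) as [H|H]; [left; auto|right].
    eapply (uS _ HU); [|exact H]. intros i Hi. destruct (uC _ IH (fun l => A (l ++ i :: nil))); cbv beta in *; tauto.
Qed.

Lemma Q_len n : Q n (fun l => length l = n).
Proof.
  induction n as [|n IH]; simpl; auto.
  apply (uS _ HU (fun _ => True)); [|apply uT, HU]. intros i _.
  eapply (uS _ (Q_ultra n)); [|exact IH]. intros l Hl. simpl in *. rewrite length_app. simpl. lia.
Qed.

Lemma Q_ext n (P P' : list I -> Prop) : (forall l, length l = n -> (P l <-> P' l)) -> (Q n P <-> Q n P').
Proof.
  intros H. split; intros HP; (eapply (uS _ (Q_ultra n)); [|exact (uI _ (Q_ultra n) _ _ (Q_len n) HP)]);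
    intros l [h1 h2]; apply (H l h1); auto.
Qed.

Lemma Q_head n : forall P, Q (S n) P <-> Q n (fun l => U (fun i => P (i :: l))).
Proof.
  induction n as [|n IH]; intros P; simpl; [tauto|].
  split; intros H; (eapply (uS _ HU); [|exact H]); intros o Ho.
  - apply (IH (fun l => P (l ++ o :: nil))) in Ho. exact Ho.
  - apply (IH (fun l => P (l ++ o :: nil))). exact Ho.
Qed.

Lemma Q_up n P : Q (S n) (fun l => P (firstn n l)) <-> Q n P.
Proof.
  simpl. rewrite <- (u_const HU (Q n P)). split; intros H; (eapply (uS _ HU); [|exact H]); intros i Hi;
    revert Hi; apply Q_ext; intros l Hl; rewrite firstn_app, Hl, Nat.sub_diag, firstn_all2 by lia; simpl;
    rewrite app_nil_r; tauto.
Qed.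

Lemma Q_mono_n m n P : m <= n -> (forall l, P l <-> P (firstn m l)) -> (Q n P <-> Q m P).
Proof.
  intros Hmn HP. replace n with ((n - m) + m) by lia. clear Hmn.
  induction (n - m) as [|d IH]; simpl plus; [tauto|].
  rewrite <- IH. rewrite <- (Q_up (d + m) P). apply Q_ext. intros l Hl.
  rewrite (HP l), (HP (firstn (d + m) l)), firstn_firstn. replace (Nat.min m (d + m)) with m by lia. tauto.
Qed.

Definition view (p : nat * (list I -> N0)) (l : list I) : N0 := snd p (firstn (fst p) l).

Lemma view_pair n (f : list I -> N0) l : view (n, f) l = f (firstn n l).
Proof. reflexivity. Qed.

Lemma view_firstn p m l : fst p <= m -> view p (firstn m l) = view p l.
Proof. intros H. unfold view. rewrite firstn_firstn. f_equal. f_equal. lia. Qed.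

Definition sR (p q : nat * (list I -> N0)) : Prop :=
  Q (Nat.max (fst p) (fst q)) (fun l => view p l = view q l).

Lemma sR_at p q n : Nat.max (fst p) (fst q) <= n -> (sR p q <-> Q n (fun l => view p l = view q l)).
Proof.
  intros H. unfold sR. symmetry. apply Q_mono_n; auto. intros l.
  rewrite !view_firstn by lia. tauto.
Qed.

Lemma sR_refl p : sR p p.
Proof. unfold sR. apply (uS _ (Q_ultra _) (fun _ => True)); auto. apply uT, Q_ultra. Qed.
Lemma sR_sym p q : sR p q -> sR q p.
Proof. unfold sR. intros H. rewrite Nat.max_comm. eapply (uS _ (Q_ultra _)); [|exact H]. intros l; auto. Qed.
Lemma sR_trans p q r : sR p q -> sR q r -> sR p r.
Proof.
  set (n := Nat.max (fst p) (Nat.max (fst q) (fst r))).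
  rewrite (sR_at p q n), (sR_at q r n), (sR_at p r n) by lia.
  intros H1 H2. eapply (uS _ (Q_ultra n)); [|exact (uI _ (Q_ultra n) _ _ H1 H2)]. intros l [-> ->]; auto.
Qed.

Definition SQ : Type@{structure.u0} := quot sR sR_refl.
Definition scls (p : nat * (list I -> N0)) : SQ := cls sR sR_refl sR_sym sR_trans p.
Definition srep (q : SQ) : nat * (list I -> N0) := rep sR sR_refl q.
Lemma scls_eq p q : scls p = scls q <-> sR p q.
Proof. apply (cls_eq sR sR_refl sR_sym sR_trans). Qed.
Lemma srep_cls p : sR (srep (scls p)) p.
Proof. apply (rep_cls sR sR_refl sR_sym sR_trans). Qed.
Lemma scls_rep q : scls (srep q) = q.
Proof. apply (cls_rep sR sR_refl sR_sym sR_trans). Qed.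

Definition Lim1 : structure L :=
  @Structure L SQ (scls (0, fun _ => witness N0))
    (fun F a => let n := finmax (fun j => fst (srep (a j))) in
                scls (n, fun l => fun_int N0 F (fun j => view (srep (a j)) l)))
    (fun Rl a => let n := finmax (fun j => fst (srep (a j))) in
                 Q n (fun l => rel_int N0 Rl (fun j => view (srep (a j)) l))).

Lemma lim1_term (r : nat -> nat * (list I -> N0)) t n :
  (forall x, x < tbnd t -> fst (r x) <= n) ->
  @t_eval L Lim1 (fun x => scls (r x)) t = scls (n, fun l => t_eval (fun x => view (r x) l) t).
Proof.
  induction t as [x|F ts IH]; simpl; intros Hb.
  - apply scls_eq. apply (sR_at _ _ n); [simpl; specialize (Hb x); lia|].
    apply (uS _ (Q_ultra n) (fun _ => True)); [|apply uT, Q_ultra]. intros l _. unfold view; simpl.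
    rewrite firstn_firstn. f_equal. f_equal. specialize (Hb x); lia.
  - assert (E : forall j, @t_eval L Lim1 (fun x => scls (r x)) (ts j) = scls (n, fun l => t_eval (fun x => view (r x) l) (ts j))).
    { intros j. apply IH. intros x Hx. apply Hb. pose proof (finmax_ge _ j (fun j => tbnd (ts j))). simpl in *; lia. }
    change (scls (finmax (fun j => fst (srep (@t_eval L Lim1 (fun x => scls (r x)) (ts j)))),
              fun l => fun_int N0 F (fun j => view (srep (@t_eval L Lim1 (fun x => scls (r x)) (ts j))) l))
      = scls (n, fun l => fun_int N0 F (fun j => t_eval (fun x => view (r x) l) (ts j)))).
    set (n0 := finmax (fun j => fst (srep (@t_eval L Lim1 (fun x => scls (r x)) (ts j))))).
    assert (Hp : forall j, fst (srep (@t_eval L Lim1 (fun x => scls (r x)) (ts j))) <= n0).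
    { intros j. apply (finmax_ge _ j (fun j => fst (srep (@t_eval L Lim1 (fun x => scls (r x)) (ts j))))). }
    set (N := Nat.max n0 n).
    apply scls_eq. apply (sR_at _ _ N); [simpl; lia|].
    assert (Hj : forall j, Q N (fun l => view (srep (@t_eval L Lim1 (fun x => scls (r x)) (ts j))) l =
                                      view (n, fun l => t_eval (fun x => view (r x) l) (ts j)) l)).
    { intros j. rewrite <- sR_at; [rewrite E; apply srep_cls|]. simpl. specialize (Hp j). lia. }
    eapply (uS _ (Q_ultra N)); [|exact (u_fin (Q_ultra N) _ _ Hj)]. intros l Hl. cbv beta in Hl.
    unfold view at 1 3; cbn [fst snd].
    f_equal. apply functional_extensionality; intros j. rewrite view_firstn by (apply Hp).
    rewrite (Hl j). reflexivity.
Qed.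

Lemma lim1_los φ : forall (r : nat -> nat * (list I -> N0)) n,
  (forall x, x < fbnd φ -> fst (r x) <= n) ->
  (@sat L Lim1 (fun x => scls (r x)) φ <-> Q n (fun l => sat (fun x => view (r x) l) φ)).
Proof.
  induction φ as [| t1 t2 | Rl ts | φ1 IH1 φ2 IH2 | y φ IH]; intros r n Hb; simpl in *.
  - split; [tauto|]. apply uN, Q_ultra.
  - rewrite (lim1_term r t1 n), (lim1_term r t2 n); try (intros; apply Hb; lia).
    rewrite scls_eq. rewrite (sR_at _ _ n) by (simpl; lia). apply Q_ext. intros l Hl.
    rewrite !view_pair. rewrite (firstn_all2 (n:=n) l) by lia. tauto.
  - assert (E : forall j, @t_eval L Lim1 (fun x => scls (r x)) (ts j) = scls (n, fun l => t_eval (fun x => view (r x) l) (ts j))).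
    { intros j. apply lim1_term. intros x Hx. apply Hb. pose proof (finmax_ge _ j (fun j => tbnd (ts j))). simpl in *; lia. }
    change (Q (finmax (fun j => fst (srep (@t_eval L Lim1 (fun x => scls (r x)) (ts j)))))
              (fun l => rel_int N0 Rl (fun j => view (srep (@t_eval L Lim1 (fun x => scls (r x)) (ts j))) l)) <->
            Q n (fun l => rel_int N0 Rl (fun j => t_eval (fun x => view (r x) l) (ts j)))).
    set (n0 := finmax (fun j => fst (srep (@t_eval L Lim1 (fun x => scls (r x)) (ts j))))).
    assert (Hp : forall j, fst (srep (@t_eval L Lim1 (fun x => scls (r x)) (ts j))) <= n0).
    { intros j. apply (finmax_ge _ j (fun j => fst (srep (@t_eval L Lim1 (fun x => scls (r x)) (ts j))))). }
    set (N := Nat.max n0 n).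
    assert (HL : Q n0 (fun l => rel_int N0 Rl (fun j => view (srep (@t_eval L Lim1 (fun x => scls (r x)) (ts j))) l)) <->
                 Q N (fun l => rel_int N0 Rl (fun j => view (srep (@t_eval L Lim1 (fun x => scls (r x)) (ts j))) l))).
    { symmetry. apply Q_mono_n; [unfold N; lia|]. intros l.
      replace (fun j => view (srep (@t_eval L Lim1 (fun x => scls (r x)) (ts j))) (firstn n0 l))
          with (fun j => view (srep (@t_eval L Lim1 (fun x => scls (r x)) (ts j))) l); [tauto|].
      apply functional_extensionality; intros j; rewrite view_firstn; auto. }
    assert (HR : Q n (fun l => rel_int N0 Rl (fun j => t_eval (fun x => view (r x) l) (ts j))) <->
                 Q N (fun l => rel_int N0 Rl (fun j => t_eval (fun x => view (r x) l) (ts j)))).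
    { symmetry. apply Q_mono_n; [unfold N; lia|]. intros l.
      replace (fun j => t_eval (fun x => view (r x) (firstn n l)) (ts j))
          with (fun j => t_eval (fun x => view (r x) l) (ts j)); [tauto|].
      apply functional_extensionality; intros j. apply t_eval_coinc. intros x Hx.
      symmetry; apply view_firstn. apply Hb. pose proof (t_occurs_bnd _ _ Hx). pose proof (finmax_ge _ j (fun j => tbnd (ts j))). simpl in *; lia. }
    rewrite HL, HR.
    assert (Hj : forall j, Q N (fun l => view (srep (@t_eval L Lim1 (fun x => scls (r x)) (ts j))) l =
                                      view (n, fun l => t_eval (fun x => view (r x) l) (ts j)) l)).
    { intros j. rewrite <- sR_at; [rewrite E; apply srep_cls|]. simpl. specialize (Hp j). lia. }
    pose proof (u_fin (Q_ultra N) _ _ Hj) as HF.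
    assert (HF' : Q N (fun l => forall j, view (srep (@t_eval L Lim1 (fun x => scls (r x)) (ts j))) l =
                                      t_eval (fun x => view (r x) l) (ts j))).
    { eapply (uS _ (Q_ultra N)); [|exact (uI _ (Q_ultra N) _ _ HF (Q_len N))]. intros l [h1 h2] j. cbv beta in h1.
      rewrite (h1 j), view_pair. apply t_eval_coinc. intros x Hx.
      apply view_firstn. apply Hb. pose proof (t_occurs_bnd _ _ Hx). pose proof (finmax_ge _ j (fun j => tbnd (ts j))). simpl in *; lia. }
    split; intros H; (eapply (uS _ (Q_ultra N)); [|exact (uI _ (Q_ultra N) _ _ HF' H)]); intros l [h1 h2].
    + replace (fun j => t_eval (fun x => view (r x) l) (ts j)) with
          (fun j => view (srep (@t_eval L Lim1 (fun x => scls (r x)) (ts j))) l); auto.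
      apply functional_extensionality; auto.
    + replace (fun j => view (srep (@t_eval L Lim1 (fun x => scls (r x)) (ts j))) l) with
          (fun j => t_eval (fun x => view (r x) l) (ts j)); auto.
      apply functional_extensionality; auto.
  - rewrite (IH1 r n), (IH2 r n); try (intros; apply Hb; lia). symmetry. apply u_imp, Q_ultra.
  - split.
    + intros Hall. apply NNPP. intros Hn.
      destruct (uC _ (Q_ultra n) (fun l => forall a : N0, sat (upd (fun x => view (r x) l) y a) φ)) as [Hc|Hc]; [contradiction|].
      pose (g := fun l => match excluded_middle_informative (exists a : N0, ~ sat (upd (fun x => view (r x) l) y a) φ) with
                          | left hh => proj1_sig (constructive_indefinite_description _ hh)
                          | right _ => witness N0 end).
      specialize (Hall (scls (n, g))).
      rewrite (sat_ext Lim1 _ _ (fun x => scls ((fun x => if Nat.eqb x y then (n, g) else r x) x))) in Hall.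
      2:{ intros x; unfold upd; destruct (Nat.eqb x y); auto. }
      rewrite (IH _ n) in Hall.
      2:{ intros x Hx. destruct (Nat.eqb x y); simpl; auto. }
      apply (uN _ (Q_ultra n)). eapply (uS _ (Q_ultra n)); [|exact (uI _ (Q_ultra n) _ _ (uI _ (Q_ultra n) _ _ Hall Hc) (Q_len n))].
      intros l [[h1 h2] h3]. cbv beta in *. apply h2. intros a.
      apply NNPP; intros Hna.
      assert (Hg : ~ sat (upd (fun x => view (r x) l) y (g l)) φ).
      { unfold g. destruct (excluded_middle_informative _) as [hh|hh].
        - apply (proj2_sig (constructive_indefinite_description _ hh)).
        - exfalso; apply hh; eauto. }
      apply Hg. revert h1. apply sat_ext. intros x. unfold upd. destruct (Nat.eqb x y); auto.
      unfold view; cbn [fst snd]. rewrite firstn_all2 by lia. auto.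
    + intros Hall q.
      set (n' := Nat.max n (fst (srep q))).
      rewrite (sat_ext Lim1 _ _ (fun x => scls ((fun x => if Nat.eqb x y then srep q else r x) x))).
      2:{ intros x; unfold upd; destruct (Nat.eqb x y); auto. symmetry; apply scls_rep. }
      rewrite (IH _ n').
      2:{ intros x Hx. destruct (Nat.eqb x y); simpl. unfold n'; lia. specialize (Hb x Hx). unfold n'; lia. }
      assert (Hall' : Q n' (fun l => forall a, sat (upd (fun x => view (r x) l) y a) φ)).
      { refine (proj2 (Q_mono_n n n' _ _ _) Hall); [unfold n'; lia|].
        intros l. split; intros HH a; specialize (HH a); revert HH; apply sat_bnd; intros x Hx;
          unfold upd; destruct (Nat.eqb x y); auto; (first [apply view_firstn | symmetry; apply view_firstn]); apply Hb; auto. }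
      clear Hall. rename Hall' into Hall.
      eapply (uS _ (Q_ultra n')); [|exact Hall]. intros l Hl. specialize (Hl (view (srep q) l)).
      revert Hl. apply sat_ext. intros x; unfold upd; destruct (Nat.eqb x y); auto.
Qed.

Definition iota0 (x : N0) : Lim1 := scls (0, fun _ => x).

Lemma iota0_elem : elem iota0.
Proof.
  intros φ v. unfold iota0. rewrite (lim1_los φ (fun x => (0, fun _ => v x)) 0); [|intros; simpl; lia].
  simpl. reflexivity.
Qed.

Definition Hrep (p : nat * (list I -> N0)) : nat * (list I -> N0) :=
  (S (fst p), fun l => match l with nil => witness N0 | i :: l' => h (snd p l') i end).

Lemma view_Hrep p i l : view (Hrep p) (i :: l) = h (view p l) i.
Proof. reflexivity. Qed.

Definition H1 (q : Lim1) : Lim1 := scls (Hrep (srep q)).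

Lemma H1_elem : elem H1.
Proof.
  intros φ v.
  pose (n := finmax_nat (fbnd φ) (fun x => fst (srep (v x)))).
  assert (Hn : forall x, x < fbnd φ -> fst (srep (v x)) <= n) by (intros x Hx; apply (finmax_nat_ge _ (fun x => fst (srep (v x)))); auto).
  rewrite (sat_ext Lim1 _ _ (fun x => scls (srep (v x)))) by (intros; symmetry; apply scls_rep).
  rewrite (lim1_los φ _ n Hn).
  unfold H1. rewrite (lim1_los φ (fun x => Hrep (srep (v x))) (S n)) by (intros; simpl; specialize (Hn x H); lia).
  rewrite Q_head. split; intros HH; (eapply (uS _ (Q_ultra n)); [|exact HH]); intros l Hl;
    [apply Eh in Hl|apply Eh]; exact Hl.
Qed.

Lemma sR_Hrep p q : sR p q -> sR (Hrep p) (Hrep q).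
Proof.
  intros E. set (M := Nat.max (fst p) (fst q)).
  rewrite (sR_at _ _ (S M)) by (simpl; unfold M; lia).
  rewrite Q_head. rewrite (sR_at _ _ M) in E by (unfold M; lia).
  eapply (uS _ (Q_ultra M)); [|exact E]. intros l El. cbv beta.
  apply (uS _ HU (fun _ => True)); [|apply uT, HU]. intros i _. rewrite !view_Hrep, El. reflexivity.
Qed.

Lemma H1_iota0 x y : U (fun i => h x i = y) -> H1 (iota0 x) = iota0 y.
Proof.
  intros Hxy. unfold H1, iota0. transitivity (scls (Hrep (0, fun _ => x))).
  - apply scls_eq. apply sR_Hrep. apply srep_cls.
  - apply scls_eq. rewrite (sR_at _ _ 1) by (simpl; lia). rewrite Q_head. simpl. exact Hxy.
Qed.

End Lim1.

Definition incr (g : nat -> nat) : Prop := forall i, g i < g (S i).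
Definition localc (R : nat) (col : (nat -> nat) -> Prop) : Prop :=
  forall g g', (forall i, i < R -> g i = g' i) -> (col g <-> col g').

Lemma incr_mono g : incr g -> forall a b, a < b -> g a < g b.
Proof.
  intros Hg a b Hab. induction b; [lia|]. destruct (Nat.eq_dec a b); [subst; apply Hg|].
  specialize (IHb ltac:(lia)). specialize (Hg b). lia.
Qed.
Lemma incr_mono_rev g : incr g -> forall a b, g a < g b -> a < b.
Proof. intros Hg a b H. destruct (Nat.lt_ge_cases a b) as [h|h]; auto.
  destruct (Nat.eq_dec a b); [subst; lia|]. pose proof (incr_mono g Hg b a ltac:(lia)). lia. Qed.
Lemma incr_inj g : incr g -> forall a b, g a = g b -> a = b.
Proof. intros Hg a b H. destruct (Nat.lt_total a b) as [h|[h|h]]; auto;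
  pose proof (incr_mono g Hg _ _ h); lia. Qed.
Lemma incr_comp g h : incr g -> incr h -> incr (fun i => g (h i)).
Proof. intros Hg Hh i. apply incr_mono; auto. Qed.
Lemma incr_S : incr S. Proof. intros i; lia. Qed.
Lemma incr_id : incr (fun i => i). Proof. intros i; lia. Qed.
Lemma incr_ge g : incr g -> forall i, i <= g i.
Proof. intros Hg i; induction i; [lia|]. specialize (Hg i); lia. Qed.

Definition cons0 (x : nat) (f : nat -> nat) : nat -> nat := fun i => match i with 0 => x | S i => f i end.

Lemma inf_enum (X : nat -> Prop) : (forall N, exists i, N <= i /\ X i) ->
  exists e, incr e /\ forall t, X (e t).
Proof.
  intros HX.
  pose (pick := fun N => proj1_sig (constructive_indefinite_description _ (HX N))).
  assert (Hp : forall N, N <= pick N /\ X (pick N)) by (intros N; apply (proj2_sig (constructive_indefinite_description _ (HX N)))).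
  pose (e := fix e t := match t with 0 => pick 0 | S t => pick (S (e t)) end).
  exists e. split.
  - intros t. simpl. destruct (Hp (S (e t))); lia.
  - intros [|t]; simpl; apply Hp.
Qed.

Theorem ramsey R : forall col, localc R col ->
  exists hh, incr hh /\ exists P : Prop, forall g, incr g -> (col (fun i => hh (g i)) <-> P).
Proof.
  induction R as [|R IHR]; intros col Hloc.
  - exists (fun i => i). split; [apply incr_id|]. exists (col (fun i => i)). intros g _. apply Hloc. lia.
  - assert (Hch : forall (x : nat) (F : nat -> nat), exists hh, incr hh /\ exists P : Prop,
               forall g, incr g -> (col (cons0 x (fun i => F (hh (g i)))) <-> P)).
    { intros x F. apply (IHR (fun g => col (cons0 x (fun i => F (g i))))). intros g g' Hgg. apply Hloc.
      intros [|i] Hi; simpl; auto. rewrite Hgg; auto; lia. }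
    pose (hsel := fun x F => proj1_sig (constructive_indefinite_description _ (Hch x F))).
    assert (Hsel : forall x F, incr (hsel x F) /\ exists P : Prop, forall g, incr g ->
               (col (cons0 x (fun i => F (hsel x F (g i)))) <-> P))
      by (intros x F; apply (proj2_sig (constructive_indefinite_description _ (Hch x F)))).
    pose (Psel := fun x F => proj1_sig (constructive_indefinite_description _ (proj2 (Hsel x F)))).
    assert (HPsel : forall x F g, incr g -> (col (cons0 x (fun i => F (hsel x F (g i)))) <-> Psel x F))
      by (intros x F; apply (proj2_sig (constructive_indefinite_description _ (proj2 (Hsel x F))))).
    pose (st := fix st n := match n with 0 => fun i => i
                   | S n => fun t => st n (S (hsel (st n 0) (fun i => st n (S i)) t)) end).
    pose (x := fun n => st n 0).
    pose (Pn := fun n => Psel (x n) (fun i => st n (S i))).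
    assert (Hst : forall n, incr (st n)).
    { induction n; simpl; [apply incr_id|]. intros t. apply incr_mono; auto.
      pose proof (proj1 (Hsel (st n 0) (fun i => st n (S i))) t). lia. }
    assert (Hhom : forall n g, incr g -> (col (cons0 (x n) (fun i => st (S n) (g i))) <-> Pn n)).
    { intros n g Hg. exact (HPsel (x n) (fun i => st n (S i)) g Hg). }
    assert (Hsub : forall d n, exists q, incr q /\ forall t, st (d + n) t = st n (q t)).
    { induction d; intros n.
      - exists (fun t => t); split; [apply incr_id|]; reflexivity.
      - destruct (IHd n) as [q [Hq Hqe]]. simpl.
        exists (fun t => q (S (hsel (st (d + n) 0) (fun i => st (d + n) (S i)) t))). split.
        + apply incr_comp; auto. intros t. pose proof (proj1 (Hsel (st (d + n) 0) (fun i => st (d + n) (S i))) t). lia.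
        + intros t. apply Hqe. }
    assert (Hx : incr x).
    { intros n. unfold x. simpl. apply incr_mono; auto. lia. }
    assert (Hpig : exists Pf : Prop, forall N, exists i, N <= i /\ (Pn i <-> Pf)).
    { destruct (classic (forall N, exists i, N <= i /\ Pn i)) as [H|H].
      - exists True. intros N. destruct (H N) as [i [h1 h2]]. exists i; split; tauto.
      - exists False. apply not_all_ex_not in H. destruct H as [N0 HN0]. intros N.
        exists (Nat.max N N0). split; [lia|]. split; [|tauto]. intros Hp. apply HN0. exists (Nat.max N N0). split; [lia|auto]. }
    destruct Hpig as [Pf HPf].
    destruct (inf_enum _ HPf) as [e [He HeX]].
    exists (fun t => x (e t)). split; [apply incr_comp; auto|]. exists Pf. intros g Hg.
    set (i := e (g 0)).
    assert (Hex : forall t, exists u, st (S i) u = x (e (g (S t)))).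
    { intros t. assert (Hlt : S i <= e (g (S t))).
      { unfold i. pose proof (incr_mono e He (g 0) (g (S t)) (incr_mono g Hg 0 (S t) ltac:(lia))). lia. }
      destruct (Hsub (e (g (S t)) - S i) (S i)) as [q [Hq Hqe]]. exists (q 0).
      rewrite <- Hqe. unfold x. f_equal. lia. }
    pose (G := fun t => proj1_sig (constructive_indefinite_description _ (Hex t))).
    assert (HG : forall t, st (S i) (G t) = x (e (g (S t))))
      by (intros t; apply (proj2_sig (constructive_indefinite_description _ (Hex t)))).
    assert (HGi : incr G).
    { intros t. apply (incr_mono_rev (st (S i)) (Hst (S i))). rewrite !HG.
      apply incr_mono; auto. apply incr_mono; auto. }
    replace (fun j => x (e (g j))) with (cons0 (x i) (fun t => st (S i) (G t))).
    + rewrite Hhom; auto. apply HeX.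
    + apply functional_extensionality; intros [|t]; simpl; auto. exact (HG t).
Qed.

Lemma ramsey_list {X : Type} (cols : list X) (R : X -> nat) (col : X -> (nat -> nat) -> Prop) :
  (forall c, localc (R c) (col c)) ->
  exists hh, incr hh /\ forall c, In c cols -> forall g, incr g -> (col c (fun i => hh (g i)) <-> col c hh).
Proof.
  intros Hloc. induction cols as [|c cols IH].
  - exists (fun i => i). split; [apply incr_id|]. intros c [].
  - destruct IH as [h1 [Hh1 Hhom1]].
    destruct (ramsey (R c) (fun g => col c (fun i => h1 (g i)))) as [h2 [Hh2 [P HP]]].
    { intros g g' Hgg. apply Hloc. intros i Hi. rewrite Hgg; auto. }
    exists (fun i => h1 (h2 i)). split; [apply incr_comp; auto|].
    intros c' Hc' g Hg. destruct Hc' as [<-|Hc'].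
    + rewrite (HP g Hg). rewrite <- (HP (fun i => i) incr_id). tauto.
    + rewrite (Hhom1 c' Hc' (fun i => h2 (g i))) by (apply incr_comp; auto).
      rewrite (Hhom1 c' Hc' h2 Hh2). tauto.
Qed.

Fixpoint code (w : list bool) : nat :=
  match w with nil => 1 | b :: w' => 2 * code w' + (if b then 1 else 0) end.

Lemma code_len w : length w < code w.
Proof. induction w as [|b w IH]; simpl; [lia|destruct b; lia]. Qed.

Lemma code_bound w : code w < 2 ^ S (length w).
Proof. induction w as [|b w IH]; simpl in *; [lia|destruct b; lia]. Qed.

Lemma code_inj w w' : code w = code w' -> w = w'.
Proof.
  revert w'; induction w as [|b w IH]; intros [|b' w'] H; simpl in H; auto.
  - pose proof (code_len w'); destruct b'; lia.
  - pose proof (code_len w); destruct b; lia.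
  - destruct b, b'; try lia; f_equal; apply IH; lia.
Qed.

Definition upos (w : list bool) : nat := 4 ^ code w.

Lemma pow4_gt c : c < 4 ^ c.
Proof. apply Nat.pow_gt_lin_r; lia. Qed.

Lemma upos_disj w w' i i' : i < length w -> i' < length w' -> upos w + i = upos w' + i' -> w = w' /\ i = i'.
Proof.
  intros Hi Hi' E. unfold upos in E.
  pose proof (code_len w). pose proof (code_len w').
  assert (Hc : code w = code w').
  { destruct (Nat.lt_total (code w) (code w')) as [h|[h|h]]; auto; exfalso.
    - pose proof (pow4_gt (code w)). pose proof (Nat.pow_le_mono_r 4 (S (code w)) (code w') ltac:(lia) h).
      simpl in *. lia.
    - pose proof (pow4_gt (code w')). pose proof (Nat.pow_le_mono_r 4 (S (code w')) (code w) ltac:(lia) h).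
      simpl in *. lia. }
  apply code_inj in Hc. subst. split; auto. lia.
Qed.

Definition suniv : zseq := fun z => exists w i, i < length w /\ z = Z.of_nat (upos w + i) /\ nth i w false = true.

Lemma suniv_at w i : i < length w -> (suniv (Z.of_nat (upos w + i)) <-> nth i w false = true).
Proof.
  intros Hi. split.
  - intros [w' [i' [h1 [h2 h3]]]]. apply Nat2Z.inj in h2. destruct (upos_disj w w' i i' Hi h1 h2) as [-> ->]. auto.
  - intros H. exists w, i. auto.
Qed.

Lemma suniv_universal : universal suniv.
Proof.
  intros w. exists (Z.of_nat (upos w)). intros i Hi.
  rewrite <- Nat2Z.inj_add. apply suniv_at; auto.
Qed.

Lemma upos_bound w : upos w <= 4 ^ (2 ^ S (length w)).
Proof. unfold upos. apply Nat.pow_le_mono_r; [lia|]. pose proof (code_bound w); lia. Qed.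

Definition bdec (P : Prop) : bool := if excluded_middle_informative P then true else false.
Lemma bdec_true P : bdec P = true <-> P.
Proof. unfold bdec; destruct (excluded_middle_informative P); split; auto; discriminate. Qed.

Definition word (N : nat) (s : nat -> Prop) : list bool := map (fun t => bdec (s t)) (seq 0 N).

Lemma word_len N s : length (word N s) = N.
Proof. unfold word. rewrite length_map, length_seq. auto. Qed.

Lemma nth_map_seq (f : nat -> bool) n t : t < n -> nth t (map f (seq 0 n)) false = f t.
Proof.
  intros Ht. rewrite (nth_indep _ false (f 0)) by (rewrite length_map, length_seq; auto).
  rewrite map_nth, seq_nth; auto.
Qed.

Lemma word_nth N s t : t < N -> (nth t (word N s) false = true <-> s t).
Proof. intros Ht. unfold word. rewrite nth_map_seq by auto. apply bdec_true. Qed.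

Lemma dual_ip {L : signature} (M : structure L) k m (φ : formula L) :
  (forall n, exists a : nat -> (Fin.t k -> M), forall J : nat -> Prop, exists b : Fin.t m -> M,
      forall i, i < n -> (sat2 φ (a i) b <-> J i)) ->
  forall N, exists (c : nat -> (Fin.t m -> M)) (d : (nat -> Prop) -> (Fin.t k -> M)),
    forall s t, t < N -> (sat2 φ (d s) (c t) <-> s t).
Proof.
  intros HIP N. destruct (HIP (2 ^ S N)) as [a Ha].
  pose (J := fun t i => exists w, length w = N /\ code w = i /\ nth t w false = true).
  pose (c := fun t => proj1_sig (constructive_indefinite_description _ (Ha (J t)))).
  assert (Hc : forall t i, i < 2 ^ S N -> (sat2 φ (a i) (c t) <-> J t i))
    by (intros t; apply (proj2_sig (constructive_indefinite_description _ (Ha (J t))))).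
  exists c, (fun s => a (code (word N s))). intros s t Ht.
  rewrite Hc by (pose proof (code_bound (word N s)); rewrite word_len in *; auto).
  unfold J. split.
  - intros [w [h1 [h2 h3]]]. apply code_inj in h2. rewrite h2 in h3. apply (word_nth N s t Ht). exact h3.
  - intros Hs. exists (word N s). split; [apply word_len|]. split; auto. apply word_nth; auto.
Qed.

Lemma u_iff_on {I : Type} {U : (I -> Prop) -> Prop} (HU : ultra U) (X P : I -> Prop) (p : Prop) :
  U X -> (forall i, X i -> (P i <-> p)) -> (U P <-> p).
Proof.
  intros HX H. rewrite <- (u_const HU p). split; intros HP; (eapply (uS _ HU); [|exact (uI _ HU _ _ HX HP)]);
    intros i [h1 h2]; apply (H i h1); auto.
Qed.

Lemma u_nat {I : Type} {U : (I -> Prop) -> Prop} (HU : ultra U) n (P : nat -> I -> Prop) :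
  (forall i, i < n -> U (P i)) -> U (fun Φ => forall i, i < n -> P i Φ).
Proof.
  intros H. eapply (uS _ HU); [|apply (u_list HU (seq 0 n) P)].
  - intros Φ HΦ i Hi. apply HΦ. apply in_seq. lia.
  - intros i Hi. apply in_seq in Hi. apply H. lia.
Qed.

Lemma env2_ucls {L : signature} (A : structure L) {I : Type@{structure.u0}} (U : (I -> Prop) -> Prop) (HU : ultra U)
  k m (fa : Fin.t k -> I -> A) (fb : Fin.t m -> I -> A) x :
  @env2 L (Ult A U HU) k m (fun j => ucls A U HU (fa j)) (fun j => ucls A U HU (fb j)) x =
  ucls A U HU (fun i => env2 (fun j => fa j i) (fun j => fb j i) x).
Proof. unfold env2. destruct (lt_dec x k); [reflexivity|]. destruct (lt_dec (x - k) m); reflexivity. Qed.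

Lemma sat2_ucls {L : signature} (A : structure L) {I : Type@{structure.u0}} (U : (I -> Prop) -> Prop) (HU : ultra U)
  k m φ (fa : Fin.t k -> I -> A) (fb : Fin.t m -> I -> A) :
  @sat2 L (Ult A U HU) k m φ (fun j => ucls A U HU (fa j)) (fun j => ucls A U HU (fb j)) <->
  U (fun i => sat2 φ (fun j => fa j i) (fun j => fb j i)).
Proof. unfold sat2. apply los_gen. intros x. apply env2_ucls. Qed.

Lemma build_P {L : signature} (M : structure L) k m (φ : formula L) :
  (forall N, exists (c : nat -> (Fin.t m -> M)) (d : (nat -> Prop) -> (Fin.t k -> M)),
    forall s t, t < N -> (sat2 φ (d s) (c t) <-> s t)) ->
  exists (P : structure L) (f : M -> P), elem f /\
    exists (cseq : nat -> (Fin.t m -> P)) (dseq : (nat -> Prop) -> (Fin.t k -> P)),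
      forall s t, sat2 φ (dseq s) (cseq t) <-> s t.
Proof.
  intros HN.
  destruct (ultra_exists (fun X : nat -> Prop => exists t, X = fun N => t < N)) as [U0 [HU0 HUX]].
  { intros l Hl. assert (Hex : exists N, forall X, In X l -> X N).
    { induction l as [|X l IH].
      - exists 0; intros X [].
      - destruct IH as [N HNl]; [intros; apply Hl; right; auto|].
        destruct (Hl X (or_introl eq_refl)) as [t ->].
        exists (Nat.max N (S t)). intros Y [<-|HY]; [lia|].
        specialize (HNl Y HY). destruct (Hl Y (or_intror HY)) as [t' ->]. lia. }
    exact Hex. }
  pose (cN := fun N => proj1_sig (constructive_indefinite_description _ (HN N))).
  pose (dN := fun N => proj1_sig (constructive_indefinite_description _ (proj2_sig (constructive_indefinite_description _ (HN N))))).
  assert (HcdN : forall N s t, t < N -> (sat2 φ (dN N s) (cN N t) <-> s t))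
    by (intros N; apply (proj2_sig (constructive_indefinite_description _ (proj2_sig (constructive_indefinite_description _ (HN N)))))).
  exists (Ult M U0 HU0), (udiag M U0 HU0). split; [apply udiag_elem|].
  exists (fun t j => ucls M U0 HU0 (fun N => cN N t j)), (fun s j => ucls M U0 HU0 (fun N => dN N s j)).
  intros s t. rewrite sat2_ucls.
  apply (u_iff_on HU0 (fun N => t < N)); [apply HUX; eauto|]. intros N HtN. apply HcdN; auto.
Qed.

Section A3.
Context {L : signature} (P : structure L) (k m : nat) (φ : formula L)
  (cseq : nat -> (Fin.t m -> P)) (dseq : (nat -> Prop) -> (Fin.t k -> P))
  (Hsh : forall s t, sat2 φ (dseq s) (cseq t) <-> s t).

Definition Cnd : Type@{structure.u0} := (nat * ((nat -> nat -> P) -> (Z -> Fin.t m -> P) -> Prop))%type.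

Definition clampZ (W : nat) (z : Z) : Z := Z.max (- Z.of_nat W) (Z.min (Z.of_nat W) z).

Lemma clampZ_id W z : (Z.abs z <= Z.of_nat W)%Z -> clampZ W z = z.
Proof. unfold clampZ. lia. Qed.

Definition ExSat (c : Cnd) (β : Z -> Fin.t m -> P) : Prop :=
  exists γ, snd c γ (fun z => β (clampZ (fst c) z)).

Definition maxW (Φ : list Cnd) : nat := fold_right (fun c a => Nat.max (fst c) a) 0 Φ.
Lemma maxW_ge Φ c : In c Φ -> fst c <= maxW Φ.
Proof. induction Φ as [|c' Φ IH]; simpl; [tauto|]. intros [<-|H]; [lia|]. specialize (IH H); lia. Qed.

Definition KK (Φ : list Cnd) : nat := S (maxW Φ).

Definition col (c : Cnd) (K : nat) (g : nat -> nat) : Prop :=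
  ExSat c (fun z => cseq (g (Z.to_nat (z + Z.of_nat K - 1)))).

Lemma col_local c K : localc (fst c + K + 1) (col c K).
Proof.
  intros g g' Hgg. unfold col, ExSat.
  replace (fun z => cseq (g (Z.to_nat (clampZ (fst c) z + Z.of_nat K - 1)))) with
          (fun z => cseq (g' (Z.to_nat (clampZ (fst c) z + Z.of_nat K - 1)))); [tauto|].
  apply functional_extensionality; intros z. rewrite Hgg; auto. unfold clampZ. lia.
Qed.

Lemma gsel_ex (Φ : list Cnd) : exists hh, incr hh /\ forall c, In c Φ -> forall g, incr g ->
   (col c (KK Φ) (fun i => hh (g i)) <-> col c (KK Φ) hh).
Proof.
  apply (ramsey_list Φ (fun c => fst c + KK Φ + 1) (fun c => col c (KK Φ))). intros c; apply col_local.
Qed.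

Definition gsel (Φ : list Cnd) : nat -> nat := proj1_sig (constructive_indefinite_description _ (gsel_ex Φ)).
Lemma gsel_incr Φ : incr (gsel Φ).
Proof. apply (proj2_sig (constructive_indefinite_description _ (gsel_ex Φ))). Qed.
Lemma gsel_hom Φ c g : In c Φ -> incr g -> (col c (KK Φ) (fun i => gsel Φ (g i)) <-> col c (KK Φ) (gsel Φ)).
Proof. intros; apply (proj2_sig (constructive_indefinite_description _ (gsel_ex Φ))); auto. Qed.

Definition bΦ (Φ : list Cnd) (z : Z) : Fin.t m -> P := cseq (gsel Φ (Z.to_nat (z + Z.of_nat (KK Φ)))).

Lemma stat_coord Φ c : In c Φ -> ExSat c (bΦ Φ) -> ExSat c (fun z => bΦ Φ (z - 1)).
Proof.
  intros Hc H.
  assert (HW : fst c <= maxW Φ) by (apply maxW_ge; auto).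
  assert (E1 : ExSat c (bΦ Φ) <-> col c (KK Φ) (fun i => gsel Φ (S i))).
  { unfold col, ExSat. replace (fun z => bΦ Φ (clampZ (fst c) z)) with
      (fun z => cseq (gsel Φ (S (Z.to_nat (clampZ (fst c) z + Z.of_nat (KK Φ) - 1))))); [tauto|].
    apply functional_extensionality; intros z. unfold bΦ. f_equal. f_equal. unfold KK, clampZ in *. lia. }
  assert (E2 : ExSat c (fun z => bΦ Φ (z - 1)) <-> col c (KK Φ) (gsel Φ)).
  { unfold col, ExSat. replace (fun z => bΦ Φ (clampZ (fst c) z - 1)) with
      (fun z => cseq (gsel Φ (Z.to_nat (clampZ (fst c) z + Z.of_nat (KK Φ) - 1)))); [tauto|].
    apply functional_extensionality; intros z. unfold bΦ. f_equal. f_equal. f_equal. lia. }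
  rewrite E2. rewrite <- (gsel_hom Φ c S Hc incr_S). apply E1; auto.
Qed.

Lemma V_ex : exists V : (list Cnd -> Prop) -> Prop, ultra V /\ forall c, V (fun Φ => In c Φ).
Proof.
  destruct (ultra_exists (fun X : list Cnd -> Prop => exists c, X = fun Φ => In c Φ)) as [V [HV HVX]].
  - intros l Hl. assert (Hex : exists Φ, forall X, In X l -> X Φ).
    { induction l as [|X l IH].
      - exists nil; intros X [].
      - destruct IH as [Φ HΦ]; [intros; apply Hl; right; auto|].
        destruct (Hl X (or_introl eq_refl)) as [c ->].
        exists (c :: Φ). intros Y [<-|HY]; [left; auto|]. destruct (Hl Y (or_intror HY)) as [c' ->].
        right. exact (HΦ _ HY). }
    exact Hex.
  - exists V. split; auto. intros c; apply HVX; eauto.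
Qed.

Definition V : (list Cnd -> Prop) -> Prop := proj1_sig (constructive_indefinite_description _ V_ex).
Lemma HV : ultra V. Proof. apply (proj2_sig (constructive_indefinite_description _ V_ex)). Qed.
Lemma V_in c : V (fun Φ => In c Φ). Proof. apply (proj2_sig (constructive_indefinite_description _ V_ex)). Qed.

Definition N0 : structure L := Ult P V HV.
Definition vcls := ucls P V HV.
Definition vrep := urep P V HV.

Definition bseq (z : Z) : Fin.t m -> N0 := fun j => vcls (fun Φ => bΦ Φ z j).

Definition sprime (s : Z -> Prop) (Φ : list Cnd) (t : nat) : Prop :=
  exists z, (0 <= z + Z.of_nat (KK Φ))%Z /\ t = gsel Φ (Z.to_nat (z + Z.of_nat (KK Φ))) /\ s z.

Definition aseq (s : Z -> Prop) : Fin.t k -> N0 := fun j => vcls (fun Φ => dseq (sprime s Φ) j).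

Definition cz (z : Z) : Cnd := (Z.to_nat (Z.abs z), fun _ _ => True).

Lemma N0_shatter s z : sat2 φ (aseq s) (bseq z) <-> s z.
Proof.
  unfold aseq, bseq, vcls, N0. rewrite (sat2_ucls P V HV k m φ (fun j Φ => dseq (sprime s Φ) j) (fun j Φ => bΦ Φ z j)).
  apply (u_iff_on HV (fun Φ => In (cz z) Φ)); [apply V_in|]. intros Φ HΦ.
  apply maxW_ge in HΦ. simpl in HΦ.
  transitivity (sprime s Φ (gsel Φ (Z.to_nat (z + Z.of_nat (KK Φ))))); [exact (Hsh _ _)|].
  unfold sprime. split.
  - intros [z' [h1 [h2 h3]]]. apply incr_inj in h2; [|apply gsel_incr].
    replace z with z'; auto. unfold KK in *. lia.
  - intros Hs. exists z. split; [unfold KK; lia|]. split; auto.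
Qed.

Definition Atom : Type@{structure.u0} := ((nat * nat) + (Z * Fin.t m))%type.

Lemma vrep_cls f : V (fun Φ => vrep (vcls f) Φ = f Φ).
Proof. apply (urep_cls P V HV). Qed.

Lemma stat (ds : list (formula L * (nat -> N0))) (ss : list (Z * Fin.t m)) :
  (forall p, In p ds -> sat (snd p) (fst p)) ->
  exists e : N0 -> N0, (forall p, In p ds -> sat (fun x => e (snd p x)) (fst p)) /\
     (forall zj, In zj ss -> e (bseq (fst zj) (snd zj)) = bseq (fst zj - 1) (snd zj)).
Proof.
  intros Hds.
  set (n := length ds).
  set (B := fold_right (fun p a => Nat.max (fbnd (fst p)) a) 0 ds).
  assert (HB : forall p, In p ds -> fbnd (fst p) <= B).
  { unfold B; clear. induction ds as [|p' ds IH]; simpl; [tauto|]. intros p [<-|H]; [apply Nat.le_max_l|]. specialize (IH p H). etransitivity; [exact IH|apply Nat.le_max_r]. }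
  set (W := fold_right (fun zj a => Nat.max (Z.to_nat (Z.abs (fst zj))) a) 0 ss).
  assert (HWz : forall zj, In zj ss -> (Z.abs (fst zj) <= Z.of_nat W)%Z).
  { unfold W; clear. induction ss as [|zj' ss IH]; simpl; [tauto|]. intros zj [<-|H]; [lia|]. specialize (IH zj H); lia. }
  set (dflt := (@f_false L, fun _ : nat => witness N0)).
  set (vv := fun i => snd (nth i ds dflt)). set (ps := fun i => fst (nth i ds dflt)).
  set (ats := (map inl (list_prod (seq 0 n) (seq 0 B)) ++ map inr ss) : list Atom).
  set (val := fun a : Atom => match a with inl (i, x) => vv i x | inr (z, j) => bseq z j end).
  set (ev := fun (γ : nat -> nat -> P) (β : Z -> Fin.t m -> P) (a : Atom) =>
                match a with inl (i, x) => γ i x | inr (z, j) => β z j end).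
  set (c0 := (W, fun (γ : nat -> nat -> P) (β : Z -> Fin.t m -> P) =>
                  (forall i, i < n -> sat (γ i) (ps i)) /\
                  (forall a a', In a ats -> In a' ats -> val a = val a' -> ev γ β a = ev γ β a')) : Cnd).
  assert (Hats_inr : forall z j, In (inr (z, j)) ats -> In (z, j) ss).
  { intros z j H. unfold ats in H. apply in_app_or in H. destruct H as [H|H]; apply in_map_iff in H;
      destruct H as [y [h1 h2]]; [discriminate|]. injection h1; intros; subst; auto. }
  assert (Hats_inl : forall i x, i < n -> x < B -> In (inl (i, x)) ats).
  { intros i x Hi Hx. unfold ats. apply in_or_app. left. apply in_map. apply in_prod; apply in_seq; lia. }
  set (γΦ := fun Φ i x => vrep (vv i x) Φ).
  assert (C1A : V (fun Φ => forall i, i < n -> sat (γΦ Φ i) (ps i))).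
  { apply (u_nat HV). intros i Hi.
    assert (Hs : sat (vv i) (ps i)) by (apply Hds; apply nth_In; auto).
    rewrite (los_gen P V HV (ps i) (vv i) (fun x => vrep (vv i x))) in Hs; auto.
    intros x. symmetry. apply (ucls_rep P V HV). }
  assert (C1B : V (fun Φ => forall a, In a ats -> ev (γΦ Φ) (fun z => bΦ Φ (clampZ W z)) a = vrep (val a) Φ)).
  { apply (u_list HV). intros [[i x]|[z j]] Ha; simpl.
    - apply (uS _ HV (fun _ => True)); [|apply uT, HV]. intros; reflexivity.
    - apply Hats_inr, HWz in Ha. simpl in Ha. rewrite clampZ_id by auto.
      eapply (uS _ HV); [|exact (vrep_cls (fun Φ => bΦ Φ z j))]. intros Φ h; simpl in *. rewrite h. reflexivity. }
  assert (C1 : V (fun Φ => ExSat c0 (bΦ Φ))).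
  { eapply (uS _ HV); [|exact (uI _ HV _ _ C1A C1B)]. intros Φ [h1 h2]. exists (γΦ Φ). simpl. split; auto.
    intros a a' Ha Ha' Hv. rewrite (h2 a Ha), (h2 a' Ha'), Hv. reflexivity. }
  pose (γ' := fun Φ => match excluded_middle_informative (ExSat c0 (fun z => bΦ Φ (z - 1))) with
                       | left h => proj1_sig (constructive_indefinite_description _ h)
                       | right _ => fun _ _ => witness P end).
  assert (HG : V (fun Φ => snd c0 (γ' Φ) (fun z => bΦ Φ (clampZ W z - 1)))).
  { eapply (uS _ HV); [|exact (uI _ HV _ _ C1 (V_in c0))]. intros Φ [h1 h2].
    pose proof (stat_coord Φ c0 h2 h1) as h3. unfold γ'. destruct (excluded_middle_informative _) as [h|h]; [|contradiction].
    apply (proj2_sig (constructive_indefinite_description _ h)). }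
  set (sval := fun a : Atom => match a with inl (i, x) => vcls (fun Φ => γ' Φ i x) | inr (z, j) => bseq (z - 1) j end).
  assert (C3 : forall a, In a ats -> V (fun Φ => vrep (sval a) Φ = ev (γ' Φ) (fun z => bΦ Φ (clampZ W z - 1)) a)).
  { intros [[i x]|[z j]] Ha; simpl.
    - apply (vrep_cls (fun Φ => γ' Φ i x)).
    - apply Hats_inr, HWz in Ha. simpl in Ha. rewrite clampZ_id by auto.
      apply (vrep_cls (fun Φ => bΦ Φ (z - 1) j)). }
  assert (C4 : forall a a', In a ats -> In a' ats -> val a = val a' -> sval a = sval a').
  { intros a a' Ha Ha' Hv.
    rewrite <- (ucls_rep P V HV (sval a)), <- (ucls_rep P V HV (sval a')). apply (ucls_eq P V HV). unfold uR.
    eapply (uS _ HV); [|exact (uI _ HV _ _ HG (uI _ HV _ _ (C3 a Ha) (C3 a' Ha')))].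
    intros Φ [h1 [h2 h3]]. unfold vrep in h2, h3. rewrite h2, h3. apply (proj2 h1); auto. }
  pose (e := fun q => match excluded_middle_informative (exists a, In a ats /\ val a = q) with
                      | left h => sval (proj1_sig (constructive_indefinite_description _ h))
                      | right _ => q end).
  assert (C5 : forall a, In a ats -> e (val a) = sval a).
  { intros a Ha. unfold e. destruct (excluded_middle_informative _) as [h|h].
    - destruct (proj2_sig (constructive_indefinite_description _ h)) as [h1 h2]. apply C4; auto.
    - exfalso; apply h; eauto. }
  exists e. split.
  - intros p Hp. destruct (In_nth ds p dflt Hp) as [i [Hi <-]].
    change (@sat L N0 (fun x => e (vv i x)) (ps i)).
    assert (HBi : fbnd (ps i) <= B) by (apply HB; apply nth_In; auto).
    rewrite (sat_bnd N0 (ps i) _ (fun x => vcls (fun Φ => if x <? B then γ' Φ i x else witness P))).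
    2:{ intros x Hx. replace (x <? B) with true by (symmetry; apply Nat.ltb_lt; lia).
        change (e (val (inl (i, x))) = sval (inl (i, x))). apply C5. apply Hats_inl; lia. }
    unfold vcls. rewrite (los P V HV (ps i) (fun x Φ => if x <? B then γ' Φ i x else witness P)).
    eapply (uS _ HV); [|exact HG]. intros Φ [h1 _]. specialize (h1 i Hi).
    revert h1. apply sat_bnd. intros x Hx. replace (x <? B) with true by (symmetry; apply Nat.ltb_lt; lia). reflexivity.
  - intros [z j] Hzj. simpl.
    assert (Ha : In (inr (z, j)) ats) by (unfold ats; apply in_or_app; right; apply in_map; auto).
    change (e (val (inr (z, j))) = sval (inr (z, j))). apply C5; auto.
Qed.

End A3.

Lemma sat2_elem {L : signature} (A B : structure L) (f : A -> B) k m (φ : formula L) (a : Fin.t k -> A) (b : Fin.t m -> A) :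
  elem f -> formula_in k m φ -> (sat2 φ (fun j => f (a j)) (fun j => f (b j)) <-> sat2 φ a b).
Proof.
  intros Hf Hin. unfold sat2. rewrite (Hf φ (env2 a b)). apply sat_coinc. intros x Hx.
  apply Hin in Hx. unfold env2. destruct (lt_dec x k); auto. destruct (lt_dec (x - k) m); auto. lia.
Qed.

Section Big.
Context {L : signature} (T : theory L) (k m : nat) (φ : formula L)
  (Hsent : forall ψ, T ψ -> sentence ψ) (Hin : formula_in k m φ).

Lemma one_to_five : has_IP T k m φ ->
     exists (M : structure L) (b : Fin.t m -> M) (σ : automorphism M),
       is_model T M /\ forall s : zseq, in_xi_image σ (@instance L M k m φ b) s.
Proof.
  intros [M [HM HIP]].
  destruct (build_P M k m φ (dual_ip M k m φ HIP)) as [P [fP [HfP [cseq [dseq Hsh]]]]].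
  set (N0' := N0 P m).
  pose (bs := bseq P m cseq). pose (as_ := aseq P k m cseq dseq).
  pose (C := fun c : (N0' -> N0') -> Prop =>
    (exists ψ (v : nat -> N0'), sat v ψ /\ c = fun e => sat (fun x => e (v x)) ψ) \/
    (exists z j, c = fun e => e (bs z j) = bs (z - 1)%Z j)).
  destruct (realize N0' N0' C) as [I [U [HU [h Hh]]]].
  { intros l Hl.
    assert (Hex : exists ds ss, (forall p, In p ds -> sat (snd p) (fst p)) /\
        forall c, In c l -> (exists p, In p ds /\ c = fun e => @sat L N0' (fun x => e (snd p x)) (fst p)) \/
                            (exists zj, In zj ss /\ c = fun e => e (bs (fst zj) (snd zj)) = bs (fst zj - 1)%Z (snd zj))).
    { induction l as [|c l IH].
      - exists nil, nil. split; [intros _ []|intros _ []].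
      - destruct IH as [ds [ss [H1 H2]]]; [intros; apply Hl; right; auto|].
        destruct (Hl c (or_introl eq_refl)) as [[ψ [v [Hs ->]]]|[z [j ->]]].
        + exists ((ψ, v) :: ds), ss. split.
          * intros p [<-|Hp]; auto.
          * intros c' [<-|Hc']; [left; exists (ψ, v); split; [left|]; auto|].
            destruct (H2 c' Hc') as [[p [h1 h2]]|[zj [h1 h2]]]; [left; exists p; split; [right|]; auto|right; eauto].
        + exists ds, ((z, j) :: ss). split; auto.
          intros c' [<-|Hc']; [right; exists (z, j); split; [left|]; auto|].
          destruct (H2 c' Hc') as [[p [h1 h2]]|[zj [h1 h2]]]; [left; eauto|right; exists zj; split; [right|]; auto]. }
    destruct Hex as [ds [ss [H1 H2]]].
    destruct (stat P m cseq ds ss H1) as [e [He1 He2]].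
    exists e. intros c Hc. destruct (H2 c Hc) as [[p [h1 ->]]|[zj [h1 ->]]]; auto. }
  assert (Eh : forall ψ (v : nat -> N0'), sat v ψ <-> U (fun i => sat (fun x => h (v x) i) ψ)).
  { intros ψ v. split; intros H.
    - apply (Hh (fun e => sat (fun x => e (v x)) ψ)). left. exists ψ, v. auto.
    - apply NNPP. intros Hn.
      assert (Hn' : U (fun i => sat (fun x => h (v x) i) (f_not ψ))).
      { apply (Hh (fun e => sat (fun x => e (v x)) (f_not ψ))). left. exists (f_not ψ), v. split; auto. }
      apply (uN _ HU). eapply (uS _ HU); [|exact (uI _ HU _ _ H Hn')]. intros i [h1 h2]. apply h2; auto. }
  assert (Hsh1 : forall z j, U (fun i => h (bs z j) i = bs (z - 1)%Z j)).
  { intros z j. apply (Hh (fun e => e (bs z j) = bs (z - 1)%Z j)). right. eauto. }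
  set (L1 := Lim1 N0' U HU).
  set (H1' := H1 N0' U HU h).
  assert (HH1 : elem H1') by (apply H1_elem; auto).
  set (Fm := Lim L1 H1' HH1).
  set (ι := fun x : N0' => limi L1 H1' HH1 (iota0 N0' U HU x)).
  assert (Hι : elem ι) by exact (elem_comp _ _ _ _ _ (iota0_elem N0' U HU) (limi_elem L1 H1' HH1)).
  set (σ := mk_aut (lsig L1 H1' HH1) (lsiginv L1 H1' HH1) (lsig_inv_l L1 H1' HH1) (lsig_inv_r L1 H1' HH1) (lsig_elem L1 H1' HH1)).
  set (β := fun z j => ι (bs z j)).
  assert (Hσβ : forall z j, aut_fun σ (β z j) = β (z - 1)%Z j).
  { intros z j. simpl. unfold β, ι. rewrite lsig_limi. f_equal. apply H1_iota0. apply Hsh1. }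
  assert (Hpow : forall w z j, aut_pow σ z (β w j) = β (w - z)%Z j).
  { intros w z j. induction z using Z.peano_ind.
    - rewrite Z.sub_0_r. reflexivity.
    - unfold Z.succ. rewrite pow_succ, IHz, Hσβ. f_equal. lia.
    - unfold Z.pred. replace (z + -1)%Z with (z - 1)%Z by lia. rewrite pow_pred, IHz.
      replace (β (w - z)%Z j) with (aut_fun σ (β (w - (z - 1))%Z j)) by (rewrite Hσβ; f_equal; lia).
      rewrite aut_inv_l. reflexivity. }
  exists Fm, (β 0%Z), σ. split.
  - apply (elem_model T M Fm (fun x => ι (udiag P (V P m) (HV P m) (fP x)))); auto.
    exact (elem_comp _ _ _ _ _ (elem_comp _ _ _ _ _ HfP (udiag_elem P (V P m) (HV P m))) Hι).
  - intros s. exists (fun j => ι (as_ s j)). intros n. unfold xi, instance, aut_pow_tuple.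
    pose proof (sat2_elem Fm Fm (aut_pow σ (- n)) k m φ (fun j => aut_pow σ n (ι (as_ s j))) (β 0%Z) (pow_elem σ (- n)) Hin) as E1.
    cbv beta in E1.
    replace (fun j => aut_pow σ (- n) (aut_pow σ n (ι (as_ s j)))) with (fun j => ι (as_ s j)) in E1
      by (apply functional_extensionality; intros j; rewrite pow_inv; auto).
    replace (fun j => aut_pow σ (- n) (β 0%Z j)) with (fun j => ι (bs n j)) in E1
      by (apply functional_extensionality; intros j; rewrite Hpow; unfold β; f_equal; f_equal; lia).
    apply (iff_trans (iff_sym E1)).
    apply (iff_trans (sat2_elem _ _ ι k m φ (as_ s) (bs n) Hι Hin)). apply N0_shatter; auto.
Qed.
End Big.

Lemma xi_shift {L : signature} (M : structure L) (σ : automorphism M) k (U : (Fin.t k -> M) -> Prop) s :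
  in_xi_image σ U s -> forall t0, in_xi_image σ U (fun t => s (t + t0)%Z).
Proof.
  intros [a Ha] t0. exists (fun j => aut_pow σ t0 (a j)). intros t. unfold xi, aut_pow_tuple in *.
  rewrite <- (Ha (t + t0)%Z).
  replace (fun j => aut_pow σ t (aut_pow σ t0 (a j))) with (fun j => aut_pow σ (t + t0) (a j)); [tauto|].
  apply functional_extensionality; intros j; rewrite pow_add; auto.
Qed.

Section Dirs.
Context {L : signature} (T : theory L) (k m : nat) (φ : formula L) (Hin : formula_in k m φ).

Lemma three_to_six :
  (exists (M : structure L) (σ : automorphism M), is_model T M /\
       forall n : nat, exists bn : Fin.t m -> M,
         forall w : list bool, length w = n ->
           exists s, in_xi_image σ (@instance L M k m φ bn) s /\ appears_in w s) ->
  exists M : structure L, is_model T M /\ dense (@rho L M k m φ).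
Proof.
  intros [M [σ [HM H3]]]. exists M. split; auto. intros F v.
  set (N := fold_right (fun z a => Nat.max (Z.to_nat (Z.abs z)) a) 0 F).
  assert (HN : forall z, In z F -> (Z.abs z <= Z.of_nat N)%Z).
  { unfold N; clear. induction F as [|z' F IH]; simpl; [tauto|]. intros z [<-|H]; [lia|]. specialize (IH z H); lia. }
  set (n := S (2 * N)).
  set (w := map (fun i => bdec (v (Z.of_nat i - Z.of_nat N)%Z)) (seq 0 n)).
  assert (Hw : length w = n) by (unfold w; rewrite length_map, length_seq; auto).
  destruct (H3 n) as [bn Hbn]. destruct (Hbn w Hw) as [s [Hs [z0 Hz0]]].
  exists (fun t => s (t + (z0 + Z.of_nat N))%Z). split.
  - exists bn, σ. apply xi_shift; auto.
  - intros z Hz. specialize (HN z Hz).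
    set (i := Z.to_nat (z + Z.of_nat N)).
    assert (Hi : i < length w) by (rewrite Hw; unfold i, n; lia).
    specialize (Hz0 i Hi). replace (z + (z0 + Z.of_nat N))%Z with (z0 + Z.of_nat i)%Z by (unfold i; lia).
    rewrite Hz0. unfold w. rewrite nth_map_seq by (rewrite Hw in Hi; auto). rewrite bdec_true.
    replace (Z.of_nat i - Z.of_nat N)%Z with z by (unfold i; lia). tauto.
Qed.

Lemma six_to_one :
  (exists M : structure L, is_model T M /\ dense (@rho L M k m φ)) -> has_IP T k m φ.
Proof.
  intros [M [HM Hd]]. exists M. split; auto. intros n.
  set (Ltot := 4 ^ (2 ^ S n) + n).
  destruct (Hd (map Z.of_nat (seq 0 Ltot)) suniv) as [s [[b [σ [a Ha]]] Hag]].
  exists (fun i j => aut_pow σ (Z.of_nat i) (a j)). intros J.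
  set (w := word n J). set (z0 := upos w).
  exists (fun j => aut_pow σ (- Z.of_nat z0) (b j)). intros i Hi.
  rewrite <- (sat2_elem M M (aut_pow σ (Z.of_nat z0)) k m φ _ _ (pow_elem σ _) Hin).
  replace (fun j => aut_pow σ (Z.of_nat z0) (aut_pow σ (Z.of_nat i) (a j))) with
      (fun j => aut_pow σ (Z.of_nat (z0 + i)) (a j))
    by (apply functional_extensionality; intros j; rewrite <- pow_add; f_equal; lia).
  replace (fun j => aut_pow σ (Z.of_nat z0) (aut_pow σ (- Z.of_nat z0) (b j))) with b
    by (apply functional_extensionality; intros j; rewrite <- (Z.opp_involutive (Z.of_nat z0)) at 1; rewrite pow_inv; auto).
  change (xi σ (@instance L M k m φ b) a (Z.of_nat (z0 + i)) <-> J i).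
  rewrite Ha. rewrite Hag.
  - unfold z0. rewrite suniv_at by (unfold w; rewrite word_len; auto). unfold w. apply word_nth; auto.
  - apply in_map. apply in_seq. pose proof (upos_bound w) as Hb.
    assert (Hl : length w = n) by (unfold w; apply word_len). rewrite Hl in Hb. fold z0 in Hb.
    unfold Ltot. lia.
Qed.

End Dirs.

Theorem theorem4p8 (L : signature) (T : theory L) (k m : nat) (φ : formula L) :
  complete_theory T -> formula_in k m φ ->
  (* (1) <-> (2) *)
  (has_IP T k m φ <->
     exists (M : structure L) (b : Fin.t m -> M) (σ : automorphism M),
       is_model T M /\ dense (in_xi_image σ (@instance L M k m φ b))) /\
  (* (1) <-> (3) *)
  (has_IP T k m φ <->
     exists (M : structure L) (σ : automorphism M), is_model T M /\
       forall n : nat, exists bn : Fin.t m -> M,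
         forall w : list bool, length w = n ->
           exists s, in_xi_image σ (@instance L M k m φ bn) s /\ appears_in w s) /\
  (* (1) <-> (4) *)
  (has_IP T k m φ <->
     exists (M : structure L) (b : Fin.t m -> M) (σ : automorphism M),
       is_model T M /\
       exists s, in_xi_image σ (@instance L M k m φ b) s /\ universal s) /\
  (* (1) <-> (5) *)
  (has_IP T k m φ <->
     exists (M : structure L) (b : Fin.t m -> M) (σ : automorphism M),
       is_model T M /\ forall s : zseq, in_xi_image σ (@instance L M k m φ b) s) /\
  (* (1) <-> (6) *)
  (has_IP T k m φ <->
     exists M : structure L, is_model T M /\ dense (@rho L M k m φ)).
Proof.
  intros [Hsent _] Hin.
  pose proof (one_to_five T k m φ Hsent Hin) as H15.
  pose proof (six_to_one T k m φ Hin) as H61.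
  pose proof (three_to_six T k m φ) as H36.
  assert (H56 : (exists (M : structure L) (b : Fin.t m -> M) (σ : automorphism M),
       is_model T M /\ forall s : zseq, in_xi_image σ (@instance L M k m φ b) s) ->
       exists M : structure L, is_model T M /\ dense (@rho L M k m φ)).
  { intros [M [b [σ [HM H]]]]. exists M. split; auto. intros F v. exists v. split; [|tauto]. exists b, σ. auto. }
  assert (H54 : (exists (M : structure L) (b : Fin.t m -> M) (σ : automorphism M),
       is_model T M /\ forall s : zseq, in_xi_image σ (@instance L M k m φ b) s) ->
     exists (M : structure L) (b : Fin.t m -> M) (σ : automorphism M),
       is_model T M /\ exists s, in_xi_image σ (@instance L M k m φ b) s /\ universal s).
  { intros [M [b [σ [HM H]]]]. exists M, b, σ. split; auto. exists suniv. split; auto. apply suniv_universal. }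
  assert (H43 : (exists (M : structure L) (b : Fin.t m -> M) (σ : automorphism M),
       is_model T M /\ exists s, in_xi_image σ (@instance L M k m φ b) s /\ universal s) ->
     exists (M : structure L) (σ : automorphism M), is_model T M /\
       forall n : nat, exists bn : Fin.t m -> M,
         forall w : list bool, length w = n ->
           exists s, in_xi_image σ (@instance L M k m φ bn) s /\ appears_in w s).
  { intros [M [b [σ [HM [s [Hs Hu]]]]]]. exists M, σ. split; auto. intros n. exists b. intros w _.
    exists s. split; auto. }
  split; [|split; [|split; [|split]]].
  - split.
    + intros H. destruct (H15 H) as [M [b [σ [HM Hall]]]]. exists M, b, σ. split; auto.
      intros F v. exists v. split; [auto|tauto].
    + intros [M [b [σ [HM Hd]]]]. apply H61. exists M. split; auto.
      intros F v. destruct (Hd F v) as [s [Hs Hsv]]. exists s. split; auto. exists b, σ. auto.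
  - split; [intros H; apply H43, H54, H15, H|intros H; apply H61, H36, H].
  - split; [intros H; apply H54, H15, H|intros H; apply H61, H36, H43, H].
  - split; [apply H15|intros H; apply H61, H56, H].
  - split; [intros H; apply H56, H15, H|apply H61].
Qed.
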